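(* Under the setup below, assume Conditions 1 and 2 and the deviation bound (D) hold, that $p_\lambda$ is continuously differentiable on $(0,\infty)$, and that $\lambda\ge 56(1-c_1)^{-1}\kappa^{-2}\lambda_0 s^{1/2}$. Let $\widehat\beta$ be a global minimizer of $L$, and let $\widetilde\beta$ be the refitted least-squares estimator using only the covariates in $\operatorname{supp}(\widehat\beta)$ (i.e. $\widetilde\beta$ is zero outside $\operatorname{supp}(\widehat\beta)$ and equals the ordinary least-squares fit of $y$ on $\{x_j:j\in\operatorname{supp}(\widehat\beta)\}$ on that support). Then with probability $1-O(p^{-c_0})$, $\widetilde\beta$ equals the oracle estimator, namely the vector whose first $s$ entries are $(X_1^TX_1)^{-1}X_1^Ty$ and whose remaining entries are $0$. Consequently $\widetilde\beta$ inherits the asymptotic distribution of the oracle estimator whenever the latter is asymptotically normal.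
   Context: Setup: linear model $y=X\beta_0+\varepsilon$ with $y\in\mathbb{R}^n$, deterministic design $X=(x_1,\dots,x_p)\in\mathbb{R}^{n\times p}$ with $\|x_j\|_2=n^{1/2}$ for all $j$, unknown $\beta_0\in\mathbb{R}^p$, random noise $\varepsilon\in\mathbb{R}^n$. Without loss of generality the support of $\beta_0$ is $\{1,\dots,s\}$: $\beta_0=(\widetilde\beta_{0,1}^T,0^T)^T$ with all $s$ entries of $\widetilde\beta_{0,1}$ nonzero. $X_1$ is the $n\times s$ submatrix of the first $s$ columns of $X$. For $a\in\mathbb{R}^p$, $\widetilde a_1\in\mathbb{R}^s$ is its first $s$ components and $\widetilde a_2\in\mathbb{R}^{p-s}$ its remaining components. The penalty $p_\lambda:[0,\infty)\to[0,\infty)$, with $p_\lambda(0)=0$, is indexed by $\lambda\ge0$, and $p_\lambda(\infty)=\lim_{t\to\infty}p_\lambda(t)$. The objective is $L(\beta)=(2n)^{-1}\|y-X\beta\|_2^2+\lambda_0\|\beta\|_1+\sum_{j=1}^p p_\lambda(|\beta_j|)$ with $\lambda_0=c\{(\log p)/n\}^{1/2}$ for a fixed constant $c>0$. Asymptotics are as $n\to\infty$ with $p,s,\lambda$ allowed to depend on $n$; in all bounds $p$ stands for $\max(n,p)$. Deviation bound (D): $\mathrm{pr}(\|n^{-1}X^T\varepsilon\|_\infty>\lambda_0/2)=O(p^{-c_0})$ for some positive constant $c_0$. Condition 1: for some constant $\kappa_0>0$, $\min\{n^{-1/2}\|X\delta\|_2:\|\delta\|_2=1,\ \|\delta\|_0<2s\}\ge\kappa_0$,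 and $\kappa=\kappa(s,7)=\min\{n^{-1/2}\|X\delta\|_2/(\|\widetilde\delta_1\|_2\vee\|\widetilde\delta_2'\|_2):\ \delta\ne0,\ \|\widetilde\delta_2\|_1\le 7\|\widetilde\delta_1\|_1\}>0$, where $\widetilde\delta_2'$ is the subvector of $\widetilde\delta_2$ of its $s$ entries of largest absolute value. Condition 2: $p_\lambda$ is increasing and concave on $[0,\infty)$, $p_\lambda(t)\ge \tfrac12\{\lambda^2-(\lambda-t)_+^2\}$ on $[0,\lambda]$, $p_\lambda'\{(1-c_1)\lambda\}\le c_1\lambda$ for some $c_1\in[0,1)$, $-p_\lambda''$ is decreasing on $[0,(1-c_1)\lambda]$; moreover $p_\lambda'\{(1-c_1)\lambda\}\le\lambda_0/4$ and $\min_{1\le j\le s}|\beta_{0,j}|>\max\{(1-c_1)\lambda,\ 2\kappa_0^{-1}p_\lambda^{1/2}(\infty)\}$. *)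

(* Defs.v *)
From Stdlib Require Import Reals Lra Lia List.
Open Scope R_scope.

Fixpoint sumR (f : nat -> R) (m : nat) : R :=
  match m with O => 0 | S m' => sumR f m' + f m' end.

Fixpoint nnz (f : nat -> R) (m : nat) : nat :=
  match m with
  | O => O
  | S m' => (nnz f m' + (if Req_EM_T (f m') 0 then 0 else 1))%nat
  end.

Definition sqnorm (f : nat -> R) (m : nat) : R := sumR (fun k => f k ^ 2) m.

Definition Xmul (X : nat -> nat -> R) (p : nat) (b : nat -> R) : nat -> R :=
  fun i => sumR (fun j => X i j * b j) p.

Definition l1range (f : nat -> R) (a b : nat) : R :=
  sumR (fun k => Rabs (f (a + k)%nat)) (b - a).

Definition sqnorm_list (f : nat -> R) (T : list nat) : R :=
  fold_right (fun j acc => f j ^ 2 + acc) 0 T.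

Definition pbar (n p : nat) : nat := Nat.max n p.

Definition lambda0 (c : R) (n p : nat) : R :=
  c * sqrt (ln (INR (pbar n p)) / INR n).

Definition Lobj (n p : nat) (X : nat -> nat -> R) (y : nat -> R) (lam0 : R)
  (pen : R -> R) (b : nat -> R) : R :=
  / (2 * INR n) * sqnorm (fun i => y i - Xmul X p b i) n
  + lam0 * sumR (fun j => Rabs (b j)) p
  + sumR (fun j => pen (Rabs (b j))) p.

Definition is_global_min (n p : nat) (X : nat -> nat -> R) (y : nat -> R)
  (lam0 : R) (pen : R -> R) (bhat : nat -> R) : Prop :=
  forall b : nat -> R, Lobj n p X y lam0 pen bhat <= Lobj n p X y lam0 pen b.

Definition supported_in (p : nat) (bhat b : nat -> R) : Prop :=
  forall j, (j < p)%nat -> bhat j = 0 -> b j = 0.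

Definition is_refit (n p : nat) (X : nat -> nat -> R) (y : nat -> R)
  (bhat bt : nat -> R) : Prop :=
  supported_in p bhat bt /\
  forall b, supported_in p bhat b ->
    sqnorm (fun i => y i - Xmul X p bt i) n <= sqnorm (fun i => y i - Xmul X p b i) n.

(* bt equals the oracle estimator: zero on s <= j < p and its first s
   entries b1 satisfy (X_1^T X_1) b1 = X_1^T y, i.e. b1 = (X_1^T X_1)^{-1} X_1^T y
   (X_1^T X_1 is invertible under Condition 1). *)
Definition is_oracle (n p s : nat) (X : nat -> nat -> R) (y : nat -> R)
  (bt : nat -> R) : Prop :=
  (forall j, (s <= j < p)%nat -> bt j = 0) /\
  (forall k, (k < s)%nat ->
     sumR (fun j => sumR (fun i => X i k * X i j) n * bt j) s
     = sumR (fun i => X i k * y i) n).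

Definition cone7 (p s : nat) (d : nat -> R) : Prop :=
  (exists j, (j < p)%nat /\ d j <> 0) /\ l1range d s p <= 7 * l1range d 0 s.

Definition admissible_T (p s : nat) (T : list nat) : Prop :=
  NoDup T /\ Forall (fun j => (s <= j < p)%nat) T /\ (length T <= s)%nat.

(* k is a lower bound of  n^{-1/2}||X d||_2 / (||d_1||_2 v ||d_2'||_2)  over the cone;
   ||d_2'||_2 = max over admissible T of (sum_{j in T} d_j^2)^{1/2} *)
Definition kappa_lb (n p s : nat) (X : nat -> nat -> R) (k : R) : Prop :=
  forall d, cone7 p s d -> forall T, admissible_T p s T ->
    / sqrt (INR n) * sqrt (sqnorm (Xmul X p d) n)
      >= k * Rmax (sqrt (sqnorm d s)) (sqrt (sqnorm_list d T)).

Definition is_kappa (n p s : nat) (X : nat -> nat -> R) (kappa : R) : Prop :=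
  kappa_lb n p s X kappa /\ (forall k, kappa_lb n p s X k -> k <= kappa).

Definition Condition1 (n p s : nat) (X : nat -> nat -> R) (kappa0 kappa : R) : Prop :=
  (forall j, (j < p)%nat -> sqnorm (fun i => X i j) n = INR n) /\
  (forall d, (nnz d p < 2 * s)%nat -> sqnorm d p = 1 ->
     / sqrt (INR n) * sqrt (sqnorm (Xmul X p d) n) >= kappa0) /\
  is_kappa n p s X kappa /\ kappa > 0.

(* pen = p_lambda, pen' its derivative on (0,oo), pen'' the derivative of pen'
   on (0,(1-c1)lambda), pinf = p_lambda(oo) *)
Definition Condition2 (p s : nat) (pen pen' pen'' : R -> R) (lam lam0 c1 kappa0 pinf : R)
  (beta0 : nat -> R) : Prop :=
  pen 0 = 0 /\ (forall t, 0 <= t -> 0 <= pen t) /\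
  (forall x y, 0 <= x -> x <= y -> pen x <= pen y) /\
  (forall x y t, 0 <= x -> 0 <= y -> 0 <= t <= 1 ->
     t * pen x + (1 - t) * pen y <= pen (t * x + (1 - t) * y)) /\
  (forall t, 0 <= t <= lam -> pen t >= / 2 * (lam ^ 2 - (Rmax (lam - t) 0) ^ 2)) /\
  pen' ((1 - c1) * lam) <= c1 * lam /\
  (forall x, 0 < x < (1 - c1) * lam -> derivable_pt_lim pen' x (pen'' x)) /\
  (forall x y, 0 < x -> x <= y -> y < (1 - c1) * lam -> - pen'' y <= - pen'' x) /\
  pen' ((1 - c1) * lam) <= lam0 / 4 /\
  (forall eps, eps > 0 -> exists T, forall t, t >= T -> Rabs (pen t - pinf) < eps) /\
  (forall j, (j < s)%nat -> Rabs (beta0 j) > Rmax ((1 - c1) * lam) (2 / kappa0 * sqrt pinf)).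

Definition is_prob {Omega : Type} (P : (Omega -> Prop) -> R) : Prop :=
  (forall A, 0 <= P A) /\ P (fun _ => True) = 1 /\
  (forall A B, (forall w, A w <-> B w) -> P A = P B) /\
  (forall A B, (forall w, A w -> B w -> False) -> P (fun w => A w \/ B w) = P A + P B).

(* Main.v *)
Require Import Defs.
From Stdlib Require Import Reals Lra Lia List FunctionalExtensionality.
Open Scope R_scope.

Lemma sumR_ext f g m : (forall k, (k < m)%nat -> f k = g k) -> sumR f m = sumR g m.
Proof. induction m; simpl; intros H; auto. rewrite IHm by (intros; apply H; lia). rewrite H by lia; auto. Qed.

Lemma sumR_plus f g m : sumR (fun k => f k + g k) m = sumR f m + sumR g m.
Proof. induction m; simpl; [lra|rewrite IHm; lra]. Qed.

Lemma sumR_minus f g m : sumR (fun k => f k - g k) m = sumR f m - sumR g m.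
Proof. induction m; simpl; [lra|rewrite IHm; lra]. Qed.

Lemma sumR_scal c f m : sumR (fun k => c * f k) m = c * sumR f m.
Proof. induction m; simpl; [lra|rewrite IHm; lra]. Qed.

Lemma sumR_zero m : sumR (fun _ => 0) m = 0.
Proof. induction m; simpl; [lra|rewrite IHm; lra]. Qed.

Lemma sumR_le f g m : (forall k, (k < m)%nat -> f k <= g k) -> sumR f m <= sumR g m.
Proof. induction m; simpl; intros H; [lra|]. assert (f m <= g m) by (apply H; lia).
 assert (sumR f m <= sumR g m) by (apply IHm; intros; apply H; lia). lra. Qed.

Lemma sumR_nonneg f m : (forall k, (k < m)%nat -> 0 <= f k) -> 0 <= sumR f m.
Proof. intros H. rewrite <- (sumR_zero m). apply sumR_le; auto. Qed.

Lemma sumR_split f a b : sumR f (a + b) = sumR f a + sumR (fun k => f (a + k)%nat) b.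
Proof. induction b; simpl. rewrite Nat.add_0_r; lra. rewrite Nat.add_succ_r; simpl. rewrite IHb; lra. Qed.

Lemma sumR_split_le f s p : (s <= p)%nat -> sumR f p = sumR f s + sumR (fun k => f (s + k)%nat) (p - s).
Proof. intros H. replace p with (s + (p - s))%nat at 1 by lia. apply sumR_split. Qed.

Lemma sumR_comm (f : nat -> nat -> R) n p :
  sumR (fun i => sumR (fun j => f i j) p) n = sumR (fun j => sumR (fun i => f i j) n) p.
Proof. induction n; simpl. symmetry; apply sumR_zero. rewrite IHn, <- sumR_plus; auto. Qed.

Lemma sumR_term_le f m j : (forall k, (k < m)%nat -> 0 <= f k) -> (j < m)%nat -> f j <= sumR f m.
Proof. induction m; intros H Hj; [lia|simpl]. destruct (Nat.eq_dec j m).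
 subst. assert (0 <= sumR f m) by (apply sumR_nonneg; intros; apply H; lia). lra.
 assert (f j <= sumR f m) by (apply IHm; [intros; apply H; lia|lia]). assert (0 <= f m) by (apply H; lia). lra. Qed.

Lemma sumR_abs f m : Rabs (sumR f m) <= sumR (fun k => Rabs (f k)) m.
Proof. induction m; simpl. rewrite Rabs_R0; lra. eapply Rle_trans. apply Rabs_triang. lra. Qed.

Lemma sumR_pos_exists f m : 0 < sumR f m -> exists k, (k < m)%nat /\ 0 < f k.
Proof. induction m; simpl; intros H; [lra|]. destruct (Rlt_dec 0 (f m)). exists m; split; auto.
 destruct IHm as [k [Hk Hk']]. lra. exists k; split; auto. Qed.

Lemma sumR_CS a b m : (sumR (fun k => a k * b k) m) ^ 2 <= sumR (fun k => a k ^ 2) m * sumR (fun k => b k ^ 2) m.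
Proof.
  set (A := sumR (fun k => a k ^ 2) m). set (B := sumR (fun k => b k ^ 2) m).
  set (C := sumR (fun k => a k * b k) m).
  assert (HA : 0 <= A) by (apply sumR_nonneg; intros; apply pow2_ge_0).
  assert (HB : 0 <= B) by (apply sumR_nonneg; intros; apply pow2_ge_0).
  assert (Hq : forall t, 0 <= t ^ 2 * A - 2 * t * C + B).
  { intros t. assert (E: t ^ 2 * A - 2 * t * C + B = sumR (fun k => (a k * t - b k) ^ 2) m).
    { rewrite (sumR_ext _ (fun k => (t^2 * a k ^ 2 - (2 * t) * (a k * b k)) + b k ^ 2)) by (intros; ring).
      rewrite sumR_plus, sumR_minus, !sumR_scal. unfold A, B, C. ring. }
    rewrite E. apply sumR_nonneg; intros; apply pow2_ge_0. }
  destruct (Req_dec A 0) as [H0|H0].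
  - assert (C = 0). { destruct (Req_dec C 0); auto. specialize (Hq ((B + 1) / (2 * C))).
      rewrite H0 in Hq. replace (((B + 1) / (2 * C)) ^ 2 * 0 - 2 * ((B + 1) / (2 * C)) * C + B) with (-1) in Hq by (field; auto). lra. }
    rewrite H, H0. lra.
  - specialize (Hq (C / A)). assert (0 < A) by lra.
    replace ((C / A) ^ 2 * A - 2 * (C / A) * C + B) with (B - C^2 / A) in Hq by (field; auto).
    assert (C ^ 2 / A <= B) by lra. apply Rmult_le_reg_r with (/ A). apply Rinv_0_lt_compat; lra.
    replace (A * B * / A) with B by (field; auto). unfold Rdiv in H1. fold C. lra.
Qed.

Definition upd (b : nat -> R) (j : nat) (t : R) : nat -> R :=
  fun k => if Nat.eq_dec k j then t else b k.

Lemma sumR_upd (G : nat -> R -> R) b j t m : (j < m)%nat ->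
  sumR (fun k => G k (upd b j t k)) m = sumR (fun k => G k (b k)) m - G j (b j) + G j t.
Proof.
  induction m; intros Hj; [lia|simpl]. unfold upd at 2. destruct (Nat.eq_dec m j).
  - subst j. rewrite (sumR_ext _ (fun k => G k (b k))). lra.
    intros k Hk. unfold upd. destruct (Nat.eq_dec k m); [lia|auto].
  - rewrite IHm by lia. lra.
Qed.

Lemma Xmul_upd X p b j t i : (j < p)%nat ->
  Xmul X p (upd b j t) i = Xmul X p b i + X i j * (t - b j).
Proof. intros Hj. unfold Xmul. rewrite (sumR_upd (fun k v => X i k * v)) by auto. ring. Qed.

Lemma Xmul_minus X p b c i : Xmul X p (fun j => b j - c j) i = Xmul X p b i - Xmul X p c i.
Proof. unfold Xmul. rewrite <- sumR_minus. apply sumR_ext; intros; ring. Qed.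

Lemma Xmul_plus X p b c i : Xmul X p (fun j => b j + c j) i = Xmul X p b i + Xmul X p c i.
Proof. unfold Xmul. rewrite <- sumR_plus. apply sumR_ext; intros; ring. Qed.

Lemma sqnorm_sub_scal u v c n : sqnorm (fun i => u i - c * v i) n
  = sqnorm u n - 2 * c * sumR (fun i => u i * v i) n + c ^ 2 * sqnorm v n.
Proof. unfold sqnorm. rewrite <- !sumR_scal.
  rewrite <- sumR_minus, <- sumR_plus. apply sumR_ext; intros; ring. Qed.

Lemma sqnorm_sub u v n : sqnorm (fun i => u i - v i) n
  = sqnorm u n - 2 * sumR (fun i => u i * v i) n + sqnorm v n.
Proof. unfold sqnorm. rewrite <- sumR_scal.
  rewrite <- sumR_minus, <- sumR_plus. apply sumR_ext; intros; ring. Qed.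

Lemma sqnorm_nonneg u n : 0 <= sqnorm u n.
Proof. apply sumR_nonneg; intros; apply pow2_ge_0. Qed.

Definition phi (lam0 : R) (pen : R -> R) (a c t : R) : R :=
  (t - c) ^ 2 / 2 - (t - c) * a + lam0 * Rabs t + pen (Rabs t).

Lemma Lobj_upd n p X y lam0 pen b j t :
  (1 <= n)%nat -> (j < p)%nat -> sqnorm (fun i => X i j) n = INR n ->
  Lobj n p X y lam0 pen (upd b j t) = Lobj n p X y lam0 pen b
   + phi lam0 pen (/ INR n * sumR (fun i => X i j * (y i - Xmul X p b i)) n) (b j) t
   - phi lam0 pen (/ INR n * sumR (fun i => X i j * (y i - Xmul X p b i)) n) (b j) (b j).
Proof.
  intros Hn Hj Hc. unfold Lobj, phi.
  rewrite (sumR_upd (fun _ v => Rabs v)) by auto.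
  rewrite (sumR_upd (fun _ v => pen (Rabs v))) by auto.
  assert (E : sqnorm (fun i => y i - Xmul X p (upd b j t) i) n =
     sqnorm (fun i => (y i - Xmul X p b i) - (t - b j) * X i j) n).
  { unfold sqnorm. apply sumR_ext; intros. rewrite Xmul_upd by auto. ring. }
  rewrite E, sqnorm_sub_scal, Hc.
  assert (0 < INR n) by (apply lt_0_INR; lia).
  rewrite (sumR_ext (fun i => (y i - Xmul X p b i) * X i j) (fun i => X i j * (y i - Xmul X p b i))) by (intros; ring).
  field. lra.
Qed.

Definition concave0 (f : R -> R) : Prop := forall x y t, 0 <= x -> 0 <= y -> 0 <= t <= 1 ->
     t * f x + (1 - t) * f y <= f (t * x + (1 - t) * y).

Lemma tangent f d a x : concave0 f -> 0 < a -> derivable_pt_lim f a d -> 0 <= x ->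
  f x <= f a + d * (x - a).
Proof.
  intros Hc Ha Hd Hx. destruct (Rle_dec (f x) (f a + d * (x - a))) as [|Hn]; auto. exfalso.
  set (D := f x - f a - d * (x - a)). assert (HD : 0 < D) by (unfold D; lra).
  assert (Hxa : x <> a). { intro; subst. unfold D in HD. lra. }
  assert (Hax : 0 < Rabs (x - a)) by (apply Rabs_pos_lt; lra).
  destruct (Hd (D / (2 * Rabs (x - a)))) as [del Hdel].
  { apply Rdiv_lt_0_compat; lra. }
  set (eta := Rmin 1 (del / (2 * Rabs (x - a)))).
  assert (Hdp : 0 < del) by (destruct del; auto).
  assert (He0 : 0 < eta). { unfold eta. apply Rmin_glb_lt; [lra|]. apply Rdiv_lt_0_compat; lra. }
  assert (He1 : eta <= 1) by apply Rmin_l.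
  assert (He2 : eta <= del / (2 * Rabs (x - a))) by apply Rmin_r.
  set (h := eta * (x - a)).
  assert (Hh0 : h <> 0). { unfold h. apply Rmult_integral_contrapositive; split; lra. }
  assert (Hh1 : Rabs h < del).
  { unfold h. rewrite Rabs_mult, (Rabs_right eta) by lra.
    apply Rle_lt_trans with (del / (2 * Rabs (x - a)) * Rabs (x - a)).
    apply Rmult_le_compat_r; lra. replace (del / (2 * Rabs (x - a)) * Rabs (x - a)) with (del / 2) by (field; lra). lra. }
  specialize (Hdel h Hh0 Hh1).
  set (q := (f (a + h) - f a) / h) in Hdel.
  assert (Hconc : eta * f x + (1 - eta) * f a <= f (a + h)).
  { replace (a + h) with (eta * x + (1 - eta) * a) by (unfold h; ring). apply Hc; lra. }
  assert (Hfq : f (a + h) - f a = q * h) by (unfold q; field; auto).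
  assert (H1 : eta * (f x - f a) <= q * eta * (x - a)) by (assert (q * h = q * eta * (x - a)) by (unfold h; ring); lra).
  assert (H2 : f x - f a <= q * (x - a)).
  { apply Rmult_le_reg_l with eta; auto. nra. }
  assert (H3 : q * (x - a) <= d * (x - a) + Rabs (q - d) * Rabs (x - a)).
  { rewrite <- Rabs_mult. replace (q * (x - a)) with (d * (x - a) + (q - d) * (x - a)) by ring.
    pose proof (Rle_abs ((q - d) * (x - a))). lra. }
  assert (H4 : Rabs (q - d) * Rabs (x - a) < D / (2 * Rabs (x - a)) * Rabs (x - a)).
  { apply Rmult_lt_compat_r; auto. }
  replace (D / (2 * Rabs (x - a)) * Rabs (x - a)) with (D / 2) in H4 by (field; lra).
  unfold D in *. lra.
Qed.


Ltac dC2 H := destruct H as (HP0 & HPnn & HPmono & HPconc & HPlow & HPd1 & HPd2 & HPdec & HPd3 & HPlim & HPsig).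

Lemma pen_low p s pen pen' pen'' lam lam0 c1 kappa0 pinf beta0 t :
  Condition2 p s pen pen' pen'' lam lam0 c1 kappa0 pinf beta0 -> 0 <= t <= lam ->
  pen t >= lam * t - t ^ 2 / 2.
Proof. intros H2 Ht. dC2 H2. specialize (HPlow t Ht). rewrite Rmax_left in HPlow by lra. lra. Qed.

Lemma pen_ub p s pen pen' pen'' lam lam0 c1 kappa0 pinf beta0 t :
  Condition2 p s pen pen' pen'' lam lam0 c1 kappa0 pinf beta0 -> 0 <= t -> pen t <= pinf.
Proof. intros H2 Ht. dC2 H2. destruct (Rle_dec (pen t) pinf) as [|Hn]; auto. exfalso.
  destruct (HPlim (pen t - pinf)) as [T HT]. lra.
  specialize (HT (Rmax T t) (Rle_ge _ _ (Rmax_l _ _))).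
  assert (pen t <= pen (Rmax T t)) by (apply HPmono; [lra|apply Rmax_r]).
  rewrite Rabs_right in HT by lra. lra. Qed.

Lemma pen_conc p s pen pen' pen'' lam lam0 c1 kappa0 pinf beta0 :
  Condition2 p s pen pen' pen'' lam lam0 c1 kappa0 pinf beta0 -> concave0 pen.
Proof. intros H2. dC2 H2. exact HPconc. Qed.

Lemma pen_slope p s pen pen' pen'' lam lam0 c1 kappa0 pinf beta0 a b :
  Condition2 p s pen pen' pen'' lam lam0 c1 kappa0 pinf beta0 ->
  (forall x, x > 0 -> derivable_pt_lim pen x (pen' x)) ->
  0 < (1 - c1) * lam -> (1 - c1) * lam <= a -> a <= b ->
  pen b - pen a <= lam0 / 4 * (b - a).
Proof.
  intros H2 Hd Ht0 Ha Hb. pose proof (pen_conc _ _ _ _ _ _ _ _ _ _ _ H2) as Hc. dC2 H2.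
  set (t0 := (1 - c1) * lam) in *.
  assert (T1 : pen b <= pen a + pen' a * (b - a)) by (apply tangent; [exact Hc|lra|apply Hd; lra|lra]).
  assert (T2 : pen' a <= pen' t0).
  { destruct (Req_dec a t0) as [E|E]. rewrite E; lra.
    assert (pen t0 <= pen a + pen' a * (t0 - a)) by (apply tangent; [exact Hc|lra|apply Hd; lra|lra]).
    assert (pen a <= pen t0 + pen' t0 * (a - t0)) by (apply tangent; [exact Hc|lra|apply Hd; lra|lra]).
    assert (0 <= (pen' a - pen' t0) * (t0 - a)) by nra.
    destruct (Rle_dec (pen' a) (pen' t0)); auto. nra. }
  nra.
Qed.

Lemma dpl_eq f x l l' : l = l' -> derivable_pt_lim f x l -> derivable_pt_lim f x l'.
Proof. intros ->; auto. Qed.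

Lemma cont_eps f x : continuity_pt f x -> forall e, 0 < e -> exists d, 0 < d /\
  forall y, Rabs (y - x) < d -> Rabs (f y - f x) < e.
Proof.
  intros Hc e He. destruct (Hc e He) as [d [Hd Hy]]. exists d; split; auto.
  intros y Hyx. destruct (Req_dec y x) as [->|Hne].
  - rewrite Rminus_diag, Rabs_R0; auto.
  - specialize (Hy y). simpl in Hy. unfold R_dist, D_x, no_cond in Hy. apply Hy. split; [split; auto|auto].
Qed.

Lemma psi_nonneg p s pen pen' pen'' lam lam0 c1 kappa0 pinf beta0 u :
  Condition2 p s pen pen' pen'' lam lam0 c1 kappa0 pinf beta0 ->
  (forall x, x > 0 -> derivable_pt_lim pen x (pen' x) /\ continuity_pt pen' x) ->
  0 <= c1 < 1 -> 0 < (1 - c1) * lam -> 0 < u < (1 - c1) * lam ->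
  pen u - u * pen' u - u ^ 2 / 2 >= 0.
Proof.
  intros H2 Hd Hc1 Ht0 Hu.
  assert (Hlam : 0 < lam). { destruct (Rlt_dec 0 lam); auto. nra. }
  pose proof (pen_conc _ _ _ _ _ _ _ _ _ _ _ H2) as Hc.
  assert (Hlow0 : pen ((1 - c1) * lam) >= lam * ((1 - c1) * lam) - ((1 - c1) * lam) ^ 2 / 2).
  { apply (pen_low _ _ _ _ _ _ _ _ _ _ _ _ H2). nra. }
  dC2 H2.
  set (t0 := (1 - c1) * lam) in *.
  set (psi := fun v => pen v - v * pen' v - v ^ 2 / 2).
  change (psi u >= 0).
  assert (Hder : forall w, 0 < w < t0 -> derivable_pt_lim psi w (- w * (pen'' w + 1))).
  { intros w Hw. destruct (Hd w) as [Hp _]; [lra|].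
    pose proof (derivable_pt_lim_mult id pen' w 1 (pen'' w) (derivable_pt_lim_id w) (HPd2 w Hw)) as Hm.
    pose proof (derivable_pt_lim_mult id id w 1 1 (derivable_pt_lim_id w) (derivable_pt_lim_id w)) as Hs.
    pose proof (derivable_pt_lim_scal _ (/2) _ _ Hs) as Hs2.
    pose proof (derivable_pt_lim_minus _ _ _ _ _ (derivable_pt_lim_minus _ _ _ _ _ Hp Hm) Hs2) as Hall.
    apply (derivable_pt_lim_ext _ psi) in Hall.
    2:{ intros z. unfold minus_fct, mult_fct, mult_real_fct, id, psi. simpl. field. }
    eapply dpl_eq; [|exact Hall]. unfold id. field. }
  assert (Hpsi_low : forall a, 0 < a -> psi a >= - a ^ 2 / 2).
  { intros a Ha. destruct (Hd a) as [Hp _]; [lra|].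
    assert (pen 0 <= pen a + pen' a * (0 - a)) by (apply tangent; auto; lra).
    unfold psi. lra. }
  assert (Hpsi_t0 : psi t0 >= 0).
  { unfold psi. assert (t0 * pen' t0 <= t0 * (c1 * lam)) by (apply Rmult_le_compat_l; lra).
    unfold t0 in *. nra. }
  destruct (Rle_dec 1 (- pen'' u)) as [Hcase|Hcase].
  -
    assert (Hinc : forall a, 0 < a < u -> psi a <= psi u).
    { intros a Ha. destruct (MVT_cor2 psi (fun w => - w * (pen'' w + 1)) a u) as [c [Hmv Hcr]]; [lra| |].
      intros c Hc'. apply Hder. lra.
      assert (- pen'' u <= - pen'' c) by (apply HPdec; lra).
      assert (0 <= - c * (pen'' c + 1)) by nra. nra. }
    destruct (Rge_dec (psi u) 0) as [|Hneg]; auto. exfalso.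
    set (a := Rmin (u / 2) (Rmin 1 (- psi u))).
    assert (Ha1 : a <= u / 2) by apply Rmin_l.
    assert (Ha2 : a <= 1) by (eapply Rle_trans; [apply Rmin_r|apply Rmin_l]).
    assert (Ha3 : a <= - psi u) by (eapply Rle_trans; [apply Rmin_r|apply Rmin_r]).
    assert (Ha0 : 0 < a). { unfold a. apply Rmin_glb_lt; [lra|apply Rmin_glb_lt; lra]. }
    specialize (Hinc a ltac:(lra)). specialize (Hpsi_low a Ha0).
    assert (a ^ 2 <= a) by nra. lra.
  -
    assert (Hdec : forall w, u < w < t0 -> psi w <= psi u).
    { intros w Hw. destruct (MVT_cor2 psi (fun w => - w * (pen'' w + 1)) u w) as [c [Hmv Hcr]]; [lra| |].
      intros c Hc'. apply Hder. lra.
      assert (- pen'' c <= - pen'' u) by (apply HPdec; lra).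
      assert (- c * (pen'' c + 1) <= 0) by nra. nra. }
    assert (Hcont : continuity_pt psi t0).
    { destruct (Hd t0) as [Hp Hpc]; [lra|].
      assert (C1 : continuity_pt pen t0) by (apply derivable_continuous_pt; exists (pen' t0); auto).
      assert (C2 : continuity_pt (fun v => v ^ 2 / 2) t0).
      { apply derivable_continuous_pt. exists (t0). 
        pose proof (derivable_pt_lim_scal _ (/2) _ _ (derivable_pt_lim_mult id id t0 1 1 (derivable_pt_lim_id t0) (derivable_pt_lim_id t0))) as Hs.
        apply (derivable_pt_lim_ext _ (fun v => v ^ 2 / 2)) in Hs.
        2:{ intros z. unfold mult_fct, mult_real_fct, id. field. }
        eapply dpl_eq; [|exact Hs]. unfold id. field. }
      assert (C3 : continuity_pt (fun v => v * pen' v) t0).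
      { apply (continuity_pt_mult id pen'); auto. apply derivable_continuous_pt, derivable_pt_id. }
      pose proof (continuity_pt_minus _ _ _ (continuity_pt_minus _ _ _ C1 C3) C2) as C.
      intros e He. destruct (C e He) as [d [Hd0 Hd1]]. exists d; split; [exact Hd0|].
      intros x Hx. exact (Hd1 x Hx). }
    destruct (Rge_dec (psi u) (psi t0)) as [|Hlt]; [lra|]. exfalso.
    destruct (cont_eps _ _ Hcont (psi t0 - psi u)) as [d [Hd0 Hd1]]; [lra|].
    set (w := t0 - Rmin (d / 2) ((t0 - u) / 2)).
    assert (Hm1 : Rmin (d / 2) ((t0 - u) / 2) <= d / 2) by apply Rmin_l.
    assert (Hm2 : Rmin (d / 2) ((t0 - u) / 2) <= (t0 - u) / 2) by apply Rmin_r.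
    assert (Hm0 : 0 < Rmin (d / 2) ((t0 - u) / 2)) by (apply Rmin_glb_lt; lra).
    specialize (Hdec w ltac:(unfold w; lra)).
    specialize (Hd1 w). rewrite Rabs_left in Hd1 by (unfold w; lra).
    assert (Hw : - (w - t0) < d) by (unfold w; lra). specialize (Hd1 Hw).
    pose proof (Rle_abs (psi w - psi t0)). pose proof (Rabs_pos (psi w - psi t0)).
    rewrite Rabs_minus_sym in Hd1. pose proof (Rle_abs (psi t0 - psi w)). lra.
Qed.

Lemma first_order lam0 pen pen' a sg u :
  (forall x, x > 0 -> derivable_pt_lim pen x (pen' x)) -> 0 < u -> sg * sg = 1 ->
  (forall t, phi lam0 pen a (sg * u) (sg * u) <= phi lam0 pen a (sg * u) t) ->
  sg * a = lam0 + pen' u.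
Proof.
  intros Hd Hu Hsg Hmin.
  set (xi := fun v => / 2 * ((v - u) * (v - u)) + (- (sg * a)) * (v - u) + lam0 * v + pen v).
  assert (Hxi : forall v, 0 < v -> xi v = phi lam0 pen a (sg * u) (sg * v)).
  { intros v Hv. unfold xi, phi. assert (Rabs (sg * v) = v).
    { rewrite Rabs_mult. assert (Rabs sg = 1). { assert (Rabs sg * Rabs sg = 1) by (rewrite <- Rabs_mult, Hsg; apply Rabs_R1).
        pose proof (Rabs_pos sg). nra. } rewrite H, Rabs_right; lra. }
    rewrite H. replace ((sg * v - sg * u) ^ 2) with (sg * sg * (v - u) ^ 2) by ring. rewrite Hsg. field. }
  assert (Hdx : derivable_pt_lim xi u (- (sg * a) + lam0 + pen' u)).
  { pose proof (derivable_pt_lim_minus _ _ _ _ _ (derivable_pt_lim_id u) (derivable_pt_lim_const u u)) as D1.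
    pose proof (derivable_pt_lim_scal _ (/2) _ _ (derivable_pt_lim_mult _ _ _ _ _ D1 D1)) as D2.
    pose proof (derivable_pt_lim_scal _ (- (sg * a)) _ _ D1) as D3.
    pose proof (derivable_pt_lim_scal _ lam0 _ _ (derivable_pt_lim_id u)) as D4.
    pose proof (derivable_pt_lim_plus _ _ _ _ _ (derivable_pt_lim_plus _ _ _ _ _ (derivable_pt_lim_plus _ _ _ _ _ D2 D3) D4) (Hd u Hu)) as D.
    apply (derivable_pt_lim_ext _ xi) in D.
    2:{ intros z. unfold plus_fct, minus_fct, mult_fct, mult_real_fct, id, fct_cte, xi. reflexivity. }
    eapply dpl_eq; [|exact D]. unfold minus_fct, id, fct_cte. ring. }
  assert (H0 : derive_pt xi u (exist _ _ Hdx) = 0).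
  { apply (deriv_minimum xi 0 (2 * u)); try lra. intros x Hx1 Hx2.
    rewrite !Hxi by lra. replace (sg * u) with (sg * u) by ring. apply Hmin. }
  simpl in H0. lra.
Qed.

Definition acoef n p X (y b : nat -> R) j := / INR n * sumR (fun i => X i j * (y i - Xmul X p b i)) n.

Lemma coord_min n p X y lam0 pen c j :
  (1 <= n)%nat -> (j < p)%nat -> sqnorm (fun i => X i j) n = INR n ->
  is_global_min n p X y lam0 pen c ->
  forall t, phi lam0 pen (acoef n p X y c j) (c j) (c j) <= phi lam0 pen (acoef n p X y c j) (c j) t.
Proof. intros Hn Hj Hc Hg t. specialize (Hg (upd c j t)). rewrite Lobj_upd in Hg by auto.
  unfold acoef. lra. Qed.

Lemma tie n p X y lam0 s pen pen' pen'' lam c1 kappa0 pinf beta0 c j :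
  Condition2 p s pen pen' pen'' lam lam0 c1 kappa0 pinf beta0 ->
  (forall x, x > 0 -> derivable_pt_lim pen x (pen' x) /\ continuity_pt pen' x) ->
  0 <= c1 < 1 -> 0 < (1 - c1) * lam ->
  (1 <= n)%nat -> (j < p)%nat -> sqnorm (fun i => X i j) n = INR n ->
  is_global_min n p X y lam0 pen c -> 0 < Rabs (c j) < (1 - c1) * lam ->
  is_global_min n p X y lam0 pen (upd c j 0).
Proof.
  intros H2 Hd Hc1 Ht0 Hn Hj Hc Hg Hu.
  assert (Hps := psi_nonneg _ _ _ _ _ _ _ _ _ _ _ (Rabs (c j)) H2 Hd Hc1 Ht0 Hu).
  assert (HP0 : pen 0 = 0) by (dC2 H2; auto).
  pose proof (coord_min _ _ _ _ _ _ _ _ Hn Hj Hc Hg) as Hm.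
  set (a := acoef n p X y c j) in *. set (u := Rabs (c j)) in *.
  assert (Hd' : forall x, x > 0 -> derivable_pt_lim pen x (pen' x)) by (intros; apply Hd; auto).
  assert (Hfo : exists sg, sg * sg = 1 /\ c j = sg * u).
  { unfold u. destruct (Rle_dec 0 (c j)). exists 1. rewrite Rabs_right by lra. split; ring.
    exists (-1). rewrite Rabs_left by lra. split; ring. }
  destruct Hfo as [sg [Hsg Hcj]].
  assert (Hsa : sg * a = lam0 + pen' u).
  { apply (first_order lam0 pen pen' a sg u Hd'); [unfold u in *; lra|auto|]. rewrite <- Hcj. auto. }
  intros b. eapply Rle_trans; [|apply Hg]. rewrite Lobj_upd by auto.
  change (/ INR n * sumR (fun i => X i j * (y i - Xmul X p c i)) n) with a.
  unfold phi. rewrite Rabs_R0, HP0. fold u. rewrite Hcj.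
  idtac.
  assert (E : (0 - sg * u) ^ 2 / 2 - (0 - sg * u) * a = u ^ 2 / 2 + u * (sg * a)).
  { replace ((0 - sg * u) ^ 2) with (sg * sg * u ^ 2) by ring. rewrite Hsg. field. }
  rewrite E, Hsa. replace (sg * u - sg * u) with 0 by ring. lra.
Qed.

Lemma zbound p s pen pen' pen'' lam lam0 c1 kappa0 pinf beta0 a cj :
  Condition2 p s pen pen' pen'' lam lam0 c1 kappa0 pinf beta0 -> 0 < lam -> 0 <= lam0 ->
  cj <> 0 -> (forall t, phi lam0 pen a cj cj <= phi lam0 pen a cj t) ->
  Rabs (cj + a) >= lam + lam0.
Proof.
  intros H2 Hl Hl0 Hcj Hm. specialize (Hm 0).
  assert (Hlow : forall t, 0 <= t <= lam -> pen t >= lam * t - t ^ 2 / 2) by (intros; eapply pen_low; eauto).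
  assert (HPl : pen lam >= lam * lam - lam ^ 2 / 2) by (apply Hlow; lra).
  assert (Hz0 : pen 0 = 0) by (dC2 H2; auto).
  assert (Hmn : forall x y, 0 <= x -> x <= y -> pen x <= pen y) by (dC2 H2; auto).
  unfold phi in Hm. rewrite Rabs_R0, Hz0 in Hm.
  set (u := Rabs cj) in *. assert (Hu : 0 < u) by (apply Rabs_pos_lt; auto).
  set (z := cj + a).
  assert (Hu2 : u ^ 2 = cj ^ 2) by (unfold u; apply pow2_abs).
  assert (H1 : z * cj >= u ^ 2 / 2 + lam0 * u + pen u).
  { unfold z. replace ((cj - cj) ^ 2 / 2 - (cj - cj) * a) with 0 in Hm by field.
    replace ((0 - cj) ^ 2 / 2 - (0 - cj) * a + lam0 * 0 + 0) with (cj ^ 2 / 2 + cj * a) in Hm by field.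
    rewrite Hu2. nra. }
  assert (H2' : Rabs z * u >= z * cj). { unfold u. rewrite <- Rabs_mult. apply Rle_ge, Rle_abs. }
  assert (H3 : Rabs z * u >= (lam + lam0) * u).
  { destruct (Rle_dec u lam).
    - specialize (Hlow u ltac:(lra)). nra.
    - assert (pen lam <= pen u) by (apply Hmn; lra). nra. }
  apply Rle_ge. apply Rmult_le_reg_r with u; lra.
Qed.

Definition ind (x : R) : R := if Req_EM_T x 0 then 0 else 1.

Lemma ind_01 x : ind x = 0 /\ x = 0 \/ ind x = 1 /\ x <> 0.
Proof. unfold ind. destruct (Req_EM_T x 0); auto. Qed.

Lemma nnz_ind d m : INR (nnz d m) = sumR (fun j => ind (d j)) m.
Proof. induction m; simpl; auto. rewrite plus_INR, IHm. unfold ind. destruct (Req_EM_T (d m) 0); simpl; lra. Qed.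

Lemma BIstar n p s X beta0 eps pen pen' pen'' lam lam0 c1 kappa0 pinf b :
  (1 <= n)%nat -> 0 < lam0 -> (s <= p)%nat ->
  (forall j, (s <= j < p)%nat -> beta0 j = 0) ->
  Condition2 p s pen pen' pen'' lam lam0 c1 kappa0 pinf beta0 ->
  (forall x, x > 0 -> derivable_pt_lim pen x (pen' x)) ->
  0 < (1 - c1) * lam ->
  (forall j, (j < p)%nat -> Rabs (/ INR n * sumR (fun i => X i j * eps i) n) <= lam0 / 2) ->
  is_global_min n p X (fun i => Xmul X p beta0 i + eps i) lam0 pen b ->
  (forall j, (j < p)%nat -> b j <> 0 -> Rabs (b j) >= (1 - c1) * lam) ->
  let d := fun j => b j - beta0 j in
  / INR n * sqnorm (Xmul X p d) n / 2 + lam0 / 2 * sumR (fun k => Rabs (d (s + k)%nat)) (p - s)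
   + pen ((1 - c1) * lam) * sumR (fun k => ind (b (s + k)%nat)) (p - s)
  <= 7 / 4 * lam0 * sumR (fun j => Rabs (d j)) s + pen ((1 - c1) * lam) * sumR (fun j => 1 - ind (b j)) s.
Proof.
  intros Hn Hl0 Hsp Hfalse H2 Hd Ht0 Hg Hgm Htp d.
  pose proof (Hgm beta0) as HL.
  set (t0 := (1 - c1) * lam) in *.
  set (g := fun j => / INR n * sumR (fun i => X i j * eps i) n).
  assert (Hnpos : 0 < INR n) by (apply lt_0_INR; lia).
  assert (Hsig : forall j, (j < s)%nat -> Rabs (beta0 j) > t0).
  { intros j Hj. dC2 H2. specialize (HPsig j Hj). pose proof (Rmax_l t0 (2 / kappa0 * sqrt pinf)). unfold t0 in *. lra. }
  assert (Hz0 : pen 0 = 0) by (dC2 H2; auto).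
  assert (Hmn : forall x y, 0 <= x -> x <= y -> pen x <= pen y) by (dC2 H2; auto).
  assert (Hnn0 : forall x, 0 <= x -> 0 <= pen x) by (dC2 H2; auto).
  assert (E1 : sqnorm (fun i => Xmul X p beta0 i + eps i - Xmul X p b i) n
     = sqnorm eps n - 2 * (INR n * sumR (fun j => d j * g j) p) + sqnorm (Xmul X p d) n).
  { unfold sqnorm. rewrite (sumR_ext _ (fun i => (eps i - Xmul X p d i) ^ 2)).
    2:{ intros. unfold d. rewrite Xmul_minus. ring. }
    fold (sqnorm (fun i => eps i - Xmul X p d i) n). rewrite sqnorm_sub. unfold sqnorm.
    f_equal. f_equal. f_equal.
    unfold Xmul. rewrite (sumR_ext _ (fun i => sumR (fun j => eps i * X i j * d j) p)).
    2:{ intros. rewrite <- sumR_scal. apply sumR_ext; intros; ring. }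
    rewrite sumR_comm. rewrite <- sumR_scal. apply sumR_ext. intros j Hj. unfold g.
    rewrite <- sumR_scal. rewrite <- sumR_scal. rewrite <- sumR_scal. apply sumR_ext; intros. field. lra. }
  assert (E2 : sqnorm (fun i => Xmul X p beta0 i + eps i - Xmul X p beta0 i) n = sqnorm eps n).
  { unfold sqnorm. apply sumR_ext; intros; ring. }
  unfold Lobj in HL. rewrite E1, E2 in HL.
  assert (HT : / INR n * sqnorm (Xmul X p d) n / 2 <=
     sumR (fun j => d j * g j + lam0 * (Rabs (beta0 j) - Rabs (b j)) + (pen (Rabs (beta0 j)) - pen (Rabs (b j)))) p).
  { rewrite !sumR_plus, sumR_scal, !sumR_minus.
    set (Q := sqnorm (Xmul X p d) n) in *. set (S := sqnorm eps n) in *.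
    set (D := sumR (fun j => d j * g j) p) in *.
    assert (E3: / (2 * INR n) * (S - 2 * (INR n * D) + Q) = / (2 * INR n) * S - D + / INR n * Q / 2) by (field; lra).
    rewrite E3 in HL. lra. }
  set (U := fun j => if Compare_dec.lt_dec j s then 7 / 4 * lam0 * Rabs (d j) + pen t0 * (1 - ind (b j))
                    else - (lam0 / 2 * Rabs (d j) + pen t0 * ind (b j))).
  assert (HTU : sumR (fun j => d j * g j + lam0 * (Rabs (beta0 j) - Rabs (b j)) + (pen (Rabs (beta0 j)) - pen (Rabs (b j)))) p
     <= sumR U p).
  { apply sumR_le. intros j Hj. unfold U.
    assert (Hdg : d j * g j <= lam0 / 2 * Rabs (d j)).
    { pose proof (Rle_abs (d j * g j)). rewrite Rabs_mult in H. specialize (Hg j Hj). fold (g j) in Hg.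
      pose proof (Rabs_pos (d j)). nra. }
    destruct (Compare_dec.lt_dec j s) as [Hjs|Hjs].
    - assert (Htri : Rabs (beta0 j) <= Rabs (b j) + Rabs (d j)).
      { replace (beta0 j) with (b j - d j) by (unfold d; ring). unfold Rminus. eapply Rle_trans; [apply Rabs_triang|]. rewrite Rabs_Ropp. lra. }
      assert (Htri2 : Rabs (beta0 j) - Rabs (b j) <= Rabs (d j)) by lra.
      assert (Hsj := Hsig j Hjs).
      assert (Hpen : pen (Rabs (beta0 j)) - pen (Rabs (b j)) <= lam0 / 4 * Rabs (d j) + pen t0 * (1 - ind (b j))).
      { destruct (ind_01 (b j)) as [[Hi Hb]|[Hi Hb]]; rewrite Hi.
        - rewrite Hb, Rabs_R0, Hz0. assert (Rabs (d j) = Rabs (beta0 j)) by (unfold d; rewrite Hb; rewrite Rminus_0_l, Rabs_Ropp; auto).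
          pose proof (pen_slope _ _ _ _ _ _ _ _ _ _ _ t0 (Rabs (beta0 j)) H2 Hd Ht0 ltac:(unfold t0 in *; lra) ltac:(unfold t0 in *; lra)). assert (0 <= lam0 / 4 * t0) by (unfold t0 in *; nra). rewrite H. lra.
        - specialize (Htp j Hj Hb). pose proof (Rabs_pos (d j)).
          destruct (Rle_dec (Rabs (beta0 j)) (Rabs (b j))).
          + assert (pen (Rabs (beta0 j)) <= pen (Rabs (b j))) by (apply Hmn; [apply Rabs_pos|auto]). assert (0 <= lam0 / 4 * Rabs (d j)) by (apply Rmult_le_pos; lra). lra.
          + pose proof (pen_slope _ _ _ _ _ _ _ _ _ _ _ (Rabs (b j)) (Rabs (beta0 j)) H2 Hd Ht0 ltac:(unfold t0 in *; lra) ltac:(unfold t0 in *; lra)). assert (lam0 / 4 * (Rabs (beta0 j) - Rabs (b j)) <= lam0 / 4 * Rabs (d j)) by (apply Rmult_le_compat_l; lra). lra. }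
      assert (lam0 * (Rabs (beta0 j) - Rabs (b j)) <= lam0 * Rabs (d j)) by (apply Rmult_le_compat_l; lra). lra.
    - assert (Hb0 : beta0 j = 0) by (apply Hfalse; lia).
      assert (Hdb : d j = b j) by (unfold d; rewrite Hb0; ring).
      rewrite Hb0, Rabs_R0, Hz0. rewrite Hdb in *.
      destruct (ind_01 (b j)) as [[Hi Hb]|[Hi Hb]]; rewrite Hi.
      + rewrite Hb, Rabs_R0, Hz0 in *. lra.
      + specialize (Htp j Hj Hb). assert (pen t0 <= pen (Rabs (b j))) by (apply Hmn; lra). lra. }
  assert (HU : sumR U p = (7 / 4 * lam0 * sumR (fun j => Rabs (d j)) s + pen t0 * sumR (fun j => 1 - ind (b j)) s)
     - (lam0 / 2 * sumR (fun k => Rabs (d (s + k)%nat)) (p - s) + pen t0 * sumR (fun k => ind (b (s + k)%nat)) (p - s))).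
  { rewrite (sumR_split_le U s p Hsp).
    rewrite (sumR_ext (fun j => U j) (fun j => 7 / 4 * lam0 * Rabs (d j) + pen t0 * (1 - ind (b j)))).
    2:{ intros k Hk. unfold U. destruct (Compare_dec.lt_dec k s); [auto|lia]. }
    rewrite (sumR_ext (fun k => U (s + k)%nat) (fun k => - (lam0 / 2 * Rabs (d (s + k)%nat) + pen t0 * ind (b (s + k)%nat)))).
    2:{ intros k Hk. unfold U. destruct (Compare_dec.lt_dec (s + k) s); [lia|auto]. }
    rewrite sumR_plus, !sumR_scal.
    rewrite (sumR_ext (fun k => - (lam0 / 2 * Rabs (d (s + k)%nat) + pen t0 * ind (b (s + k)%nat)))
      (fun k => (-1) * (lam0 / 2 * Rabs (d (s + k)%nat) + pen t0 * ind (b (s + k)%nat)))) by (intros; ring).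
    rewrite sumR_scal, sumR_plus, !sumR_scal. ring. }
  lra.
Qed.

Lemma le_sqrt_of_sq a b : 0 <= a -> a ^ 2 <= b -> a <= sqrt b.
Proof. intros Ha H. rewrite <- (sqrt_pow2 a Ha). apply sqrt_le_1_alt. auto. Qed.

Lemma sumR_const c m : sumR (fun _ => c) m = INR m * c.
Proof. induction m; simpl sumR; [simpl; ring|]. rewrite IHm, S_INR. ring. Qed.

Lemma sqrt_scale n Q : (1 <= n)%nat -> 0 <= Q -> / sqrt (INR n) * sqrt Q = sqrt (/ INR n * Q).
Proof. intros Hn HQ. assert (0 < INR n) by (apply lt_0_INR; lia).
  rewrite sqrt_mult_alt by (left; apply Rinv_0_lt_compat; lra). rewrite sqrt_inv. auto. Qed.

Lemma l1_CS d s : sumR (fun j => Rabs (d j)) s <= sqrt (INR s) * sqrt (sqnorm d s).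
Proof.
  rewrite <- sqrt_mult_alt by apply pos_INR. apply le_sqrt_of_sq. apply sumR_nonneg; intros; apply Rabs_pos.
  pose proof (sumR_CS (fun j => Rabs (d j)) (fun _ => 1) s) as H.
  rewrite (sumR_ext (fun k => Rabs (d k) * 1) (fun k => Rabs (d k))) in H by (intros; ring).
  rewrite (sumR_ext (fun k => 1 ^ 2) (fun _ => 1)) in H by (intros; ring).
  rewrite sumR_const in H. unfold sqnorm.
  rewrite (sumR_ext (fun k => Rabs (d k) ^ 2) (fun k => d k ^ 2)) in H by (intros; apply pow2_abs). lra.
Qed.

Lemma RE n p s X kappa d alpha lam0 : (1 <= n)%nat -> 0 < lam0 -> 0 < alpha -> (s <= p)%nat ->
  kappa_lb n p s X kappa -> 0 < kappa ->
  alpha * (/ INR n * sqnorm (Xmul X p d) n) + lam0 / 2 * sumR (fun k => Rabs (d (s + k)%nat)) (p - s)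
    <= 7 / 4 * lam0 * sumR (fun j => Rabs (d j)) s ->
  sqrt (/ INR n * sqnorm (Xmul X p d) n) <= 7 / 4 * lam0 * sqrt (INR s) / (alpha * kappa) /\
  sqrt (sqnorm d s) <= 7 / 4 * lam0 * sqrt (INR s) / (alpha * kappa ^ 2).
Proof.
  intros Hn Hl0 Ha Hsp Hk Hk0 H.
  assert (Hnpos : 0 < INR n) by (apply lt_0_INR; lia).
  assert (Hss : 0 <= sqrt (INR s)) by apply sqrt_pos.
  assert (HK : 0 <= 7 / 4 * lam0 * sqrt (INR s)) by (apply Rmult_le_pos; lra).
  assert (HB1 : 0 <= 7 / 4 * lam0 * sqrt (INR s) / (alpha * kappa)) by (unfold Rdiv; apply Rmult_le_pos; [lra|left; apply Rinv_0_lt_compat; nra]).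
  assert (HB2 : 0 <= 7 / 4 * lam0 * sqrt (INR s) / (alpha * kappa ^ 2)) by (unfold Rdiv; apply Rmult_le_pos; [lra|left; apply Rinv_0_lt_compat; apply Rmult_lt_0_compat; [lra|apply pow_lt; lra]]).
  destruct (Classical_Prop.classic (exists j, (j < p)%nat /\ d j <> 0)) as [Hex|Hnex].
  2:{ assert (Hz : forall j, (j < p)%nat -> d j = 0).
      { intros j Hj. destruct (Req_dec (d j) 0); auto. exfalso; apply Hnex; eauto. }
      assert (E1 : sqnorm (Xmul X p d) n = 0).
      { unfold sqnorm. rewrite <- (sumR_zero n). apply sumR_ext. intros i Hi. unfold Xmul.
        rewrite (sumR_ext _ (fun _ => 0)) by (intros j Hj; rewrite Hz by auto; ring). rewrite sumR_zero. ring. }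
      assert (E2 : sqnorm d s = 0).
      { unfold sqnorm. rewrite <- (sumR_zero s). apply sumR_ext. intros j Hj. rewrite Hz by lia. ring. }
      rewrite E1, E2, Rmult_0_r, sqrt_0. split; auto. }
  set (A1 := sumR (fun j => Rabs (d j)) s) in *.
  set (A2 := sumR (fun k => Rabs (d (s + k)%nat)) (p - s)) in *.
  set (Q := sqnorm (Xmul X p d) n) in *.
  assert (HQ : 0 <= Q) by apply sqnorm_nonneg.
  assert (HSX : 0 <= / INR n * Q) by (apply Rmult_le_pos; [left; apply Rinv_0_lt_compat|]; lra).
  assert (HA1 : 0 <= A1) by (apply sumR_nonneg; intros; apply Rabs_pos).
  assert (HA2 : 0 <= A2) by (apply sumR_nonneg; intros; apply Rabs_pos).
  assert (Hcone : cone7 p s d).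
  { split; auto. unfold l1range. rewrite Nat.sub_0_r. simpl. fold A2. fold A1. nra. }
  assert (Hadm : admissible_T p s nil).
  { split; [constructor|split; [constructor|simpl; lia]]. }
  specialize (Hk d Hcone nil Hadm). simpl sqnorm_list in Hk. rewrite sqrt_0 in Hk.
  fold Q in Hk. rewrite sqrt_scale in Hk by auto.
  set (R1 := sqrt (/ INR n * Q)) in *. set (N1 := sqrt (sqnorm d s)) in *.
  assert (HN1 : 0 <= N1) by apply sqrt_pos. assert (HR1 : 0 <= R1) by apply sqrt_pos.
  assert (Hk' : kappa * N1 <= R1) by (pose proof (Rmax_l N1 0); nra).
  assert (HCS : A1 <= sqrt (INR s) * N1) by apply l1_CS.
  assert (HR2 : R1 * R1 = / INR n * Q) by (apply sqrt_sqrt; auto).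
  set (K := 7 / 4 * lam0 * sqrt (INR s)) in *.
  assert (Hmain : alpha * (R1 * R1) * kappa <= K * R1).
  { rewrite HR2. assert (alpha * (/ INR n * Q) <= 7 / 4 * lam0 * A1) by (assert (0 <= lam0 / 2 * A2) by (apply Rmult_le_pos; lra); lra).
    assert (7 / 4 * lam0 * A1 <= K * N1) by (unfold K; rewrite (Rmult_assoc (7 / 4 * lam0)); apply Rmult_le_compat_l; lra).
    nra. }
  assert (HR : R1 <= K / (alpha * kappa)).
  { destruct (Req_dec R1 0) as [E|E]. rewrite E; auto.
    apply Rmult_le_reg_l with (alpha * kappa). nra.
    replace (alpha * kappa * (K / (alpha * kappa))) with K by (field; lra).
    assert (0 < R1) by lra. nra. }
  split; auto.
  apply Rmult_le_reg_l with kappa; auto.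
  replace (kappa * (K / (alpha * kappa ^ 2))) with (K / (alpha * kappa)) by (field; lra). lra.
Qed.

Lemma nnz_scale d c m : c <> 0 -> nnz (fun j => d j / c) m = nnz d m.
Proof. intros Hc. induction m; simpl; auto. rewrite IHm.
  destruct (Req_EM_T (d m / c) 0) as [E|E]; destruct (Req_EM_T (d m) 0) as [F|F]; auto.
  - exfalso. apply F. unfold Rdiv in E. apply Rmult_integral in E. destruct E; auto.
    exfalso. apply (Rinv_neq_0_compat c Hc); auto.
  - exfalso. apply E. rewrite F. unfold Rdiv; ring. Qed.

Lemma kappa0_bound n p s X kappa0 d : (1 <= n)%nat -> kappa0 > 0 ->
  (forall d, (nnz d p < 2 * s)%nat -> sqnorm d p = 1 ->
     / sqrt (INR n) * sqrt (sqnorm (Xmul X p d) n) >= kappa0) ->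
  (nnz d p < 2 * s)%nat -> / INR n * sqnorm (Xmul X p d) n >= kappa0 ^ 2 * sqnorm d p.
Proof.
  intros Hn Hk0 Hc Hnz. assert (Hnpos : 0 < INR n) by (apply lt_0_INR; lia).
  assert (HQ : 0 <= sqnorm (Xmul X p d) n) by apply sqnorm_nonneg.
  assert (HD : 0 <= sqnorm d p) by apply sqnorm_nonneg.
  destruct (Req_dec (sqnorm d p) 0) as [E|E].
  { rewrite E. apply Rle_ge. rewrite Rmult_0_r. apply Rmult_le_pos; [left; apply Rinv_0_lt_compat|]; lra. }
  set (c := sqrt (sqnorm d p)). assert (Hc0 : 0 < c) by (apply sqrt_lt_R0; lra).
  assert (Hcc : c * c = sqnorm d p) by (apply sqrt_sqrt; lra).
  specialize (Hc (fun j => d j / c)). rewrite nnz_scale in Hc by lra. specialize (Hc Hnz).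
  assert (E1 : sqnorm (fun j => d j / c) p = 1).
  { unfold sqnorm. rewrite (sumR_ext _ (fun k => / (c * c) * d k ^ 2)) by (intros; field; lra).
    rewrite sumR_scal. fold (sqnorm d p). rewrite Hcc. field. lra. }
  specialize (Hc E1).
  assert (E2 : sqnorm (Xmul X p (fun j => d j / c)) n = sqnorm (Xmul X p d) n / (c * c)).
  { unfold sqnorm, Xmul. unfold Rdiv at 2. rewrite Rmult_comm, <- sumR_scal. apply sumR_ext; intros.
    rewrite (sumR_ext (fun j => X k j * (d j / c)) (fun j => / c * (X k j * d j))) by (intros; field; lra).
    rewrite sumR_scal. field. lra. }
  assert (Hq2 : 0 <= sqnorm (Xmul X p d) n / (c * c)) by (apply Rmult_le_pos; [|left; apply Rinv_0_lt_compat]; nra).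
  rewrite E2 in Hc. rewrite (sqrt_scale n _ Hn Hq2) in Hc.
  set (Q := sqnorm (Xmul X p d) n) in *.
  assert (Hsq : 0 <= / INR n * (Q / (c * c))) by (apply Rmult_le_pos; [left; apply Rinv_0_lt_compat|apply Rmult_le_pos; [|left; apply Rinv_0_lt_compat]]; nra).
  assert (H1 : kappa0 * kappa0 <= / INR n * (Q / (c * c))).
  { rewrite <- (sqrt_sqrt _ Hsq). apply Rmult_le_compat; lra. }
  rewrite <- Hcc. apply Rle_ge.
  replace (/ INR n * (Q / (c * c))) with ((/ INR n * Q) / (c * c)) in H1 by (field; lra).
  apply Rmult_le_reg_r with (/ (c * c)). apply Rinv_0_lt_compat; nra.
  replace (kappa0 ^ 2 * (c * c) * / (c * c)) with (kappa0 * kappa0) by (field; lra). unfold Rdiv in H1. lra.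
Qed.

Lemma abs_le_sqrt_sum d s j : (j < s)%nat -> Rabs (d j) <= sqrt (sqnorm d s).
Proof. intros Hj. apply le_sqrt_of_sq. apply Rabs_pos. rewrite pow2_abs. unfold sqnorm.
  apply (sumR_term_le (fun k => d k ^ 2)); auto. intros; apply pow2_ge_0. Qed.

Lemma main_lemma n p s X beta0 eps pen pen' pen'' lam lam0 c1 kappa0 kappa pinf b :
  (1 <= n)%nat -> 0 < lam0 -> 0 <= c1 < 1 -> kappa0 > 0 -> (s <= p)%nat ->
  (forall j, (j < s)%nat -> beta0 j <> 0) -> (forall j, (s <= j < p)%nat -> beta0 j = 0) ->
  Condition1 n p s X kappa0 kappa ->
  Condition2 p s pen pen' pen'' lam lam0 c1 kappa0 pinf beta0 ->
  (forall x, x > 0 -> derivable_pt_lim pen x (pen' x)) ->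
  0 < kappa <= 1 -> 0 < sqrt (INR s) ->
  (1 - c1) * lam >= 56 / kappa ^ 2 * lam0 * sqrt (INR s) ->
  (forall j, (j < p)%nat -> Rabs (/ INR n * sumR (fun i => X i j * eps i) n) <= lam0 / 2) ->
  is_global_min n p X (fun i => Xmul X p beta0 i + eps i) lam0 pen b ->
  (forall j, (j < p)%nat -> b j <> 0 -> Rabs (b j) >= (1 - c1) * lam) ->
  (forall j, (j < s)%nat -> b j <> 0) /\ (forall j, (s <= j < p)%nat -> b j = 0) /\
  sqrt (/ INR n * sqnorm (Xmul X p (fun j => b j - beta0 j)) n) <= 7 / 2 * lam0 * sqrt (INR s) / kappa.
Proof.
  intros Hn Hl0 Hc1 Hk0 Hsp Htrue Hfalse H1 H2 Hd Hk Hs Hlam Hg Hgm Htp.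
  assert (Hkpos : 0 < lam0 * sqrt (INR s) / kappa ^ 2).
  { unfold Rdiv. apply Rmult_lt_0_compat. nra. apply Rinv_0_lt_compat, pow_lt; lra. }
  assert (Ht0 : 0 < (1 - c1) * lam).
  { assert (56 / kappa ^ 2 * lam0 * sqrt (INR s) = 56 * (lam0 * sqrt (INR s) / kappa ^ 2)) by (field; lra). lra. }
  assert (Hlp : 0 < lam) by (destruct (Rlt_dec 0 lam); auto; nra).
  assert (Htl : (1 - c1) * lam <= lam) by nra.
  pose proof (BIstar n p s X beta0 eps pen pen' pen'' lam lam0 c1 kappa0 pinf b Hn Hl0 Hsp Hfalse H2 Hd Ht0 Hg Hgm Htp) as BI.
  cbv zeta in BI.
  set (t0 := (1 - c1) * lam) in *.
  set (d := fun j => b j - beta0 j) in *.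
  set (SX := / INR n * sqnorm (Xmul X p d) n) in *.
  set (A1 := sumR (fun j => Rabs (d j)) s) in *.
  set (A2 := sumR (fun k => Rabs (d (s + k)%nat)) (p - s)) in *.
  set (M := sumR (fun k => ind (b (s + k)%nat)) (p - s)) in *.
  set (Fc := sumR (fun j => 1 - ind (b j)) s) in *.
  destruct H1 as (Hcol & Hk0c & [Hkl _] & _).
  assert (Hnpos : 0 < INR n) by (apply lt_0_INR; lia).
  assert (HSX : 0 <= SX) by (apply Rmult_le_pos; [left; apply Rinv_0_lt_compat; lra|apply sqnorm_nonneg]).
  assert (HA1 : 0 <= A1) by (apply sumR_nonneg; intros; apply Rabs_pos).
  assert (HA2 : 0 <= A2) by (apply sumR_nonneg; intros; apply Rabs_pos).
  assert (HM : 0 <= M) by (apply sumR_nonneg; intros k _; destruct (ind_01 (b (s + k)%nat)) as [[-> _]|[-> _]]; lra).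
  assert (HFc : 0 <= Fc) by (apply sumR_nonneg; intros k _; destruct (ind_01 (b k)) as [[-> _]|[-> _]]; lra).
  assert (Hpt0 : pen t0 >= t0 ^ 2 / 2).
  { pose proof (pen_low _ _ _ _ _ _ _ _ _ _ _ t0 H2 ltac:(lra)). assert (lam * t0 >= t0 * t0) by nra. nra. }
  assert (Hpt0' : 0 < pen t0) by (assert (0 < t0 ^ 2) by (apply pow_lt; lra); lra).
  assert (Hpinf : pen t0 <= pinf) by (apply (pen_ub _ _ _ _ _ _ _ _ _ _ _ _ H2); lra).
  set (L := lam0 * sqrt (INR s) / kappa ^ 2) in *.
  assert (Ht0L : t0 >= 56 * L) by (unfold L, t0 in *; replace (56 * (lam0 * sqrt (INR s) / kappa ^ 2)) with (56 / kappa ^ 2 * lam0 * sqrt (INR s)) by (field; lra); lra).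
  assert (KC : sqrt (sqnorm d s) < t0 -> forall j, (j < s)%nat -> b j <> 0).
  { intros HN j Hj Hb. pose proof (abs_le_sqrt_sum d s j Hj).
    assert (Rabs (d j) = Rabs (beta0 j)) by (unfold d; rewrite Hb, Rminus_0_l, Rabs_Ropp; auto).
    dC2 H2. specialize (HPsig j Hj). pose proof (Rmax_l ((1 - c1) * lam) (2 / kappa0 * sqrt pinf)) as Hmx.
    fold t0 in Hmx. fold t0 in HPsig. lra. }
  assert (KF : (forall j, (j < s)%nat -> b j <> 0) -> Fc = 0).
  { intros Hall. unfold Fc. rewrite <- (sumR_zero s). apply sumR_ext. intros j Hj.
    destruct (ind_01 (b j)) as [[_ E]|[E _]]. exfalso; apply (Hall j Hj E). rewrite E; ring. }
  destruct (Rle_dec Fc M) as [Hcase|Hcase].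
  -
    assert (Hre : 1 / 2 * SX + lam0 / 2 * A2 <= 7 / 4 * lam0 * A1).
    { assert (pen t0 * Fc <= pen t0 * M) by (apply Rmult_le_compat_l; lra). lra. }
    destruct (RE n p s X kappa d (1/2) lam0 Hn Hl0 ltac:(lra) Hsp Hkl ltac:(lra) Hre) as [HR HN].
    replace (7 / 4 * lam0 * sqrt (INR s) / (1 / 2 * kappa ^ 2)) with (7 / 2 * L) in HN by (unfold L; field; lra).
    replace (7 / 4 * lam0 * sqrt (INR s) / (1 / 2 * kappa)) with (7 / 2 * lam0 * sqrt (INR s) / kappa) in HR by (field; lra).
    assert (Hnz : forall j, (j < s)%nat -> b j <> 0) by (apply KC; lra).
    split; auto. split; auto.
    intros j Hj. destruct (Req_dec (b j) 0) as [|Hb]; auto. exfalso.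
    assert (HM1 : 1 <= M).
    { unfold M. replace 1 with (ind (b (s + (j - s))%nat)).
      apply (sumR_term_le (fun k => ind (b (s + k)%nat))). intros k _. destruct (ind_01 (b (s + k)%nat)) as [[-> _]|[-> _]]; lra. lia.
      replace (s + (j - s))%nat with j by lia. destruct (ind_01 (b j)) as [[_ E]|[E _]]; [contradiction|auto]. }
    rewrite (KF Hnz) in BI.
    assert (HA1b : A1 <= sqrt (INR s) * sqrt (sqnorm d s)) by apply l1_CS.
    assert (HA1c : A1 <= sqrt (INR s) * (7 / 2 * L)) by (eapply Rle_trans; [exact HA1b|apply Rmult_le_compat_l; lra]).
    assert (Hs2 : sqrt (INR s) * sqrt (INR s) = INR s) by (apply sqrt_sqrt, pos_INR).
    assert (HpM : pen t0 <= pen t0 * M) by (assert (0 <= pen t0) by nra; nra).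
    assert (Hbnd : pen t0 <= 7 / 4 * lam0 * (sqrt (INR s) * (7 / 2 * L))).
    { assert (7 / 4 * lam0 * A1 <= 7 / 4 * lam0 * (sqrt (INR s) * (7 / 2 * L))) by (apply Rmult_le_compat_l; lra).
      assert (0 <= lam0 / 2 * A2) by (apply Rmult_le_pos; lra). lra. }
    assert (HLk : lam0 * sqrt (INR s) <= L).
    { unfold L. apply Rmult_le_reg_r with (kappa ^ 2). apply pow_lt; lra.
      replace (lam0 * sqrt (INR s) / kappa ^ 2 * kappa ^ 2) with (lam0 * sqrt (INR s)) by (field; lra).
      assert (kappa ^ 2 <= 1) by nra. assert (0 < lam0 * sqrt (INR s)) by nra. nra. }
    assert (t0 ^ 2 >= (56 * L) ^ 2) by (assert (0 < L) by auto; nra).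
    assert (0 < L) by auto. nra.
  -
    exfalso.
    assert (HFs : Fc <= INR s).
    { unfold Fc. rewrite <- (Rmult_1_r (INR s)), <- sumR_const. apply sumR_le. intros k _.
      destruct (ind_01 (b k)) as [[-> _]|[-> _]]; lra. }
    assert (Hnnz : (nnz d p < 2 * s)%nat).
    { apply INR_lt. rewrite nnz_ind, mult_INR. simpl (INR 2).
      rewrite (sumR_split_le _ s p Hsp).
      assert (sumR (fun j => ind (d j)) s <= INR s).
      { rewrite <- (Rmult_1_r (INR s)), <- sumR_const. apply sumR_le. intros k _.
        destruct (ind_01 (d k)) as [[-> _]|[-> _]]; lra. }
      assert (sumR (fun k => ind (d (s + k)%nat)) (p - s) = M).
      { unfold M. apply sumR_ext. intros k Hk'. unfold d. rewrite (Hfalse (s + k)%nat) by lia. f_equal; ring. }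
      lra. }
    pose proof (kappa0_bound n p s X kappa0 d Hn Hk0 Hk0c Hnnz) as HK0. fold SX in HK0.
    assert (Hsplit : sqnorm d s <= sqnorm d p).
    { unfold sqnorm. rewrite (sumR_split_le _ s p Hsp).
      assert (0 <= sumR (fun k => d (s + k)%nat ^ 2) (p - s)) by (apply sumR_nonneg; intros; apply pow2_ge_0). lra. }
    assert (Hsq : 4 * pinf / kappa0 ^ 2 * Fc <= sqnorm d s).
    { unfold Fc. rewrite <- sumR_scal. unfold sqnorm. apply sumR_le. intros j Hj.
      destruct (ind_01 (b j)) as [[Hi Hb]|[Hi Hb]]; rewrite Hi.
      - dC2 H2. specialize (HPsig j Hj). pose proof (Rmax_r ((1 - c1) * lam) (2 / kappa0 * sqrt pinf)).
        assert (Hpi : 0 <= pinf) by (pose proof (HPnn t0 ltac:(lra)); lra).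
        assert (Hb2 : 2 / kappa0 * sqrt pinf < Rabs (beta0 j)) by lra.
        assert (0 <= 2 / kappa0 * sqrt pinf) by (apply Rmult_le_pos; [unfold Rdiv; apply Rmult_le_pos; [lra|left; apply Rinv_0_lt_compat; lra]|apply sqrt_pos]).
        assert ((2 / kappa0 * sqrt pinf) ^ 2 = 4 * pinf / kappa0 ^ 2).
        { replace ((2 / kappa0 * sqrt pinf) ^ 2) with (4 * (sqrt pinf * sqrt pinf) / kappa0 ^ 2) by (field; lra).
          rewrite sqrt_sqrt by auto. auto. }
        assert (d j ^ 2 = Rabs (beta0 j) ^ 2) by (unfold d; rewrite Hb, pow2_abs; ring).
        nra.
      - assert (0 <= d j ^ 2) by apply pow2_ge_0. replace (4 * pinf / kappa0 ^ 2 * (1 - 1)) with 0 by ring. lra. }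
    assert (HSXb : 4 * pen t0 * Fc <= SX).
    { assert (4 * pen t0 * Fc <= 4 * pinf * Fc) by nra.
      assert (Hq3 : kappa0 ^ 2 * (4 * pinf / kappa0 ^ 2 * Fc) <= kappa0 ^ 2 * sqnorm d p) by (apply Rmult_le_compat_l; [nra|lra]).
      replace (kappa0 ^ 2 * (4 * pinf / kappa0 ^ 2 * Fc)) with (4 * pinf * Fc) in Hq3 by (field; lra). lra. }
    assert (Hre : 1 / 4 * SX + lam0 / 2 * A2 <= 7 / 4 * lam0 * A1).
    { assert (0 <= pen t0 * M) by nra. lra. }
    destruct (RE n p s X kappa d (1/4) lam0 Hn Hl0 ltac:(lra) Hsp Hkl ltac:(lra) Hre) as [_ HN].
    replace (7 / 4 * lam0 * sqrt (INR s) / (1 / 4 * kappa ^ 2)) with (7 * L) in HN by (unfold L; field; lra).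
    assert (Hnz : forall j, (j < s)%nat -> b j <> 0) by (apply KC; lra).
    rewrite (KF Hnz) in Hcase. lra.
Qed.

Definition zo (b : nat -> R) (K : nat -> bool) (m : nat) : nat -> R :=
  fun k => if andb (Nat.ltb k m) (K k) then 0 else b k.

Lemma zo_glob n p X y lam0 s pen pen' pen'' lam c1 kappa0 pinf beta0 b K :
  Condition2 p s pen pen' pen'' lam lam0 c1 kappa0 pinf beta0 ->
  (forall x, x > 0 -> derivable_pt_lim pen x (pen' x) /\ continuity_pt pen' x) ->
  0 <= c1 < 1 -> 0 < (1 - c1) * lam -> (1 <= n)%nat ->
  (forall j, (j < p)%nat -> sqnorm (fun i => X i j) n = INR n) ->
  (forall k, K k = true -> (k < p)%nat /\ 0 < Rabs (b k) < (1 - c1) * lam) ->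
  is_global_min n p X y lam0 pen b -> forall m, is_global_min n p X y lam0 pen (zo b K m).
Proof.
  intros H2 Hd Hc1 Ht0 Hn Hcol HK Hg m. induction m.
  - replace (zo b K 0) with b; [auto|]. apply functional_extensionality. intros k. unfold zo. simpl. auto.
  - destruct (K m) eqn:Km.
    + replace (zo b K (S m)) with (upd (zo b K m) m 0).
      2:{ apply functional_extensionality. intros k. unfold zo, upd. destruct (Nat.eq_dec k m).
          subst. rewrite Km. rewrite (proj2 (Nat.ltb_lt m (S m))) by lia. auto.
          destruct (Nat.ltb_spec k m); destruct (Nat.ltb_spec k (S m)); simpl; auto; lia. }
      destruct (HK m Km) as [Hm Hb].
      apply (tie n p X y lam0 s pen pen' pen'' lam c1 kappa0 pinf beta0); auto.
      unfold zo. rewrite Nat.ltb_irrefl. simpl. auto.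
    + replace (zo b K (S m)) with (zo b K m); [auto|].
      apply functional_extensionality. intros k. unfold zo. destruct (Nat.eq_dec k m).
      subst. rewrite Km, !Bool.andb_false_r. auto.
      destruct (Nat.ltb_spec k m); destruct (Nat.ltb_spec k (S m)); simpl; auto; lia.
Qed.

Lemma refit_oracle n p s X y bhat bt : (1 <= n)%nat -> (s <= p)%nat ->
  (forall j, (j < p)%nat -> sqnorm (fun i => X i j) n = INR n) ->
  (forall j, (j < s)%nat -> bhat j <> 0) -> (forall j, (s <= j < p)%nat -> bhat j = 0) ->
  is_refit n p X y bhat bt -> is_oracle n p s X y bt.
Proof.
  intros Hn Hsp Hcol Hnz Hz [Hsup Hmin].
  assert (Hnpos : 0 < INR n) by (apply lt_0_INR; lia).
  assert (Hbt0 : forall j, (s <= j < p)%nat -> bt j = 0) by (intros j Hj; apply Hsup; [lia|apply Hz; auto]).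
  split; auto. intros k Hk.
  set (r := fun i => y i - Xmul X p bt i).
  set (D := sumR (fun i => r i * X i k) n).
  assert (HD : D = 0).
  { set (t := bt k + D / INR n).
    assert (Hs : supported_in p bhat (upd bt k t)).
    { intros j Hj Hb. unfold upd. destruct (Nat.eq_dec j k). subst. exfalso; apply (Hnz k Hk Hb).
      apply Hsup; auto. }
    specialize (Hmin _ Hs).
    assert (E : sqnorm (fun i => y i - Xmul X p (upd bt k t) i) n = sqnorm (fun i => r i - (t - bt k) * X i k) n).
    { unfold sqnorm. apply sumR_ext. intros i _. unfold r. rewrite Xmul_upd by lia. ring. }
    rewrite E, sqnorm_sub_scal in Hmin. fold D in Hmin. rewrite (Hcol k ltac:(lia)) in Hmin. fold r in Hmin.
    replace (t - bt k) with (D / INR n) in Hmin by (unfold t; ring).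
    assert (0 <= - (D * D) / INR n) by (replace (- (D * D) / INR n) with (- 2 * (D / INR n) * D + (D / INR n) ^ 2 * INR n) by (field; lra); lra).
    assert (D * D <= 0).
    { apply Rmult_le_reg_r with (/ INR n). apply Rinv_0_lt_compat; lra. unfold Rdiv in H. lra. }
    nra. }
  assert (HX : forall i, Xmul X p bt i = sumR (fun j => X i j * bt j) s).
  { intros i. unfold Xmul. rewrite (sumR_split_le _ s p Hsp).
    rewrite (sumR_ext (fun k0 => X i (s + k0)%nat * bt (s + k0)%nat) (fun _ => 0)).
    rewrite sumR_zero; ring. intros k0 Hk0. rewrite Hbt0 by lia. ring. }
  unfold D, r in HD.
  rewrite (sumR_ext _ (fun i => X i k * y i - X i k * Xmul X p bt i)) in HD by (intros; ring).
  rewrite sumR_minus in HD.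
  rewrite (sumR_ext (fun i => X i k * Xmul X p bt i) (fun i => sumR (fun j => X i k * X i j * bt j) s)) in HD.
  2:{ intros i _. rewrite HX, <- sumR_scal. apply sumR_ext; intros; ring. }
  rewrite sumR_comm in HD.
  rewrite (sumR_ext (fun j => sumR (fun i => X i k * X i j) n * bt j) (fun j => sumR (fun i => X i k * X i j * bt j) n)).
  lra. intros j _. rewrite Rmult_comm, <- sumR_scal. apply sumR_ext; intros; ring.
Qed.

Lemma col_CS n (X : nat -> nat -> R) j v : (1 <= n)%nat -> sqnorm (fun i => X i j) n = INR n ->
  Rabs (/ INR n * sumR (fun i => X i j * v i) n) <= sqrt (/ INR n * sqnorm v n).
Proof.
  intros Hn Hc. assert (Hnpos : 0 < INR n) by (apply lt_0_INR; lia).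
  apply le_sqrt_of_sq. apply Rabs_pos. rewrite pow2_abs.
  pose proof (sumR_CS (fun i => X i j) v n) as H. cbv beta in H.
  change (sumR (fun k => X k j ^ 2) n) with (sqnorm (fun i => X i j) n) in H. change (sumR (fun k => v k ^ 2) n) with (sqnorm v n) in H.
  rewrite Hc in H. set (S := sumR (fun i => X i j * v i) n) in *.
  assert (Hi : 0 < / INR n) by (apply Rinv_0_lt_compat; lra).
  assert (E : (/ INR n * S) ^ 2 = / INR n * / INR n * S ^ 2) by ring. rewrite E.
  assert (/ INR n * / INR n * S ^ 2 <= / INR n * / INR n * (INR n * sqnorm v n)) by (apply Rmult_le_compat_l; nra).
  replace (/ INR n * / INR n * (INR n * sqnorm v n)) with (/ INR n * sqnorm v n) in H0 by (field; lra). lra.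
Qed.

Lemma acoef_decomp n p X beta0 eps b j : (1 <= n)%nat ->
  acoef n p X (fun i => Xmul X p beta0 i + eps i) b j =
  / INR n * sumR (fun i => X i j * eps i) n - / INR n * sumR (fun i => X i j * Xmul X p (fun k => b k - beta0 k) i) n.
Proof. intros Hn. unfold acoef. rewrite <- Rmult_minus_distr_l, <- sumR_minus. f_equal. apply sumR_ext. intros.
  rewrite Xmul_minus. ring. Qed.

Definition smallb (t0 : R) (x : R) : bool :=
  if Req_EM_T x 0 then false else if Rlt_dec (Rabs x) t0 then true else false.

Lemma smallb_true t0 x : smallb t0 x = true -> 0 < Rabs x < t0.
Proof. unfold smallb. destruct (Req_EM_T x 0); [discriminate|]. destruct (Rlt_dec (Rabs x) t0); [|discriminate].
  intros _. split; auto. apply Rabs_pos_lt; auto. Qed.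

Lemma smallb_false t0 x : smallb t0 x = false -> x = 0 \/ Rabs x >= t0.
Proof. unfold smallb. destruct (Req_EM_T x 0); auto. destruct (Rlt_dec (Rabs x) t0); [discriminate|]. intros; right; lra. Qed.

Lemma s_pos n p s X kappa : is_kappa n p s X kappa -> (1 <= s)%nat.
Proof.
  intros [_ Hmax]. destruct s; [|lia]. exfalso.
  assert (kappa_lb n p 0 X (kappa + 1)).
  { intros d [[j [Hj Hd]] Hc] T _. exfalso. unfold l1range in Hc. simpl in Hc. rewrite Nat.sub_0_r in Hc.
    assert (Rabs (d j) <= sumR (fun k => Rabs (d k)) p) by (apply (sumR_term_le (fun k => Rabs (d k))); auto; intros; apply Rabs_pos).
    assert (0 < Rabs (d j)) by (apply Rabs_pos_lt; auto). lra. }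
  specialize (Hmax _ H). lra.
Qed.

Lemma kappa_le1 n p s X kappa : (1 <= n)%nat -> (1 <= s)%nat -> (s <= p)%nat ->
  sqnorm (fun i => X i 0%nat) n = INR n -> kappa_lb n p s X kappa -> kappa <= 1.
Proof.
  intros Hn Hs Hsp Hc Hk. assert (Hnpos : 0 < INR n) by (apply lt_0_INR; lia).
  set (e := upd (fun _ => 0) 0 1).
  assert (Hcone : cone7 p s e).
  { split. exists 0%nat. split. lia. unfold e, upd. simpl. lra.
    unfold l1range. rewrite (sumR_ext _ (fun _ => 0)). rewrite sumR_zero.
    apply Rmult_le_pos; [lra|apply sumR_nonneg; intros; apply Rabs_pos].
    intros k _. unfold e, upd. destruct (Nat.eq_dec (s + k) 0); [lia|]. apply Rabs_R0. }
  assert (Hadm : admissible_T p s nil) by (split; [constructor|split; [constructor|simpl; lia]]).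
  specialize (Hk e Hcone nil Hadm). simpl sqnorm_list in Hk. rewrite sqrt_0 in Hk.
  assert (E1 : sqnorm (Xmul X p e) n = INR n).
  { rewrite <- Hc. unfold sqnorm. apply sumR_ext. intros i _. unfold e. rewrite Xmul_upd by lia.
    unfold Xmul. rewrite (sumR_ext (fun j => X i j * 0) (fun _ => 0)) by (intros; ring). rewrite sumR_zero. ring. }
  assert (E2 : sqnorm e s = 1).
  { unfold sqnorm, e. rewrite (sumR_upd (fun _ v => v ^ 2)) by lia.
    rewrite (sumR_ext (fun _ => 0 ^ 2) (fun _ => 0)) by (intros; ring). rewrite sumR_zero. ring. }
  rewrite E1, E2, sqrt_1 in Hk. rewrite Rmax_left in Hk by lra.
  assert (/ sqrt (INR n) * sqrt (INR n) = 1) by (field; apply Rgt_not_eq, sqrt_lt_R0; lra). lra.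
Qed.

Lemma core n p s X beta0 eps pen pen' pen'' lam lam0 c1 kappa0 kappa pinf :
  (1 <= n)%nat -> 0 < lam0 -> 0 <= c1 < 1 -> kappa0 > 0 -> (s <= p)%nat ->
  (forall j, (j < s)%nat -> beta0 j <> 0) -> (forall j, (s <= j < p)%nat -> beta0 j = 0) ->
  Condition1 n p s X kappa0 kappa ->
  Condition2 p s pen pen' pen'' lam lam0 c1 kappa0 pinf beta0 ->
  (forall x, x > 0 -> derivable_pt_lim pen x (pen' x) /\ continuity_pt pen' x) ->
  lam >= 56 / (1 - c1) / (kappa ^ 2) * lam0 * sqrt (INR s) ->
  (forall j, (j < p)%nat -> Rabs (/ INR n * sumR (fun i => X i j * eps i) n) <= lam0 / 2) ->
  forall bhat bt : nat -> R,
    is_global_min n p X (fun i => Xmul X p beta0 i + eps i) lam0 pen bhat ->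
    is_refit n p X (fun i => Xmul X p beta0 i + eps i) bhat bt ->
    is_oracle n p s X (fun i => Xmul X p beta0 i + eps i) bt.
Proof.
  intros Hn Hl0 Hc1 Hk0 Hsp Htrue Hfalse H1 H2 Hd Hlam Hg bhat bt Hgm Href.
  set (y := fun i => Xmul X p beta0 i + eps i) in *.
  pose proof H1 as H1'. destruct H1' as (Hcol & Hk0c & Hkap & Hkpos).
  pose proof (s_pos _ _ _ _ _ Hkap) as Hs1.
  assert (Hk1 : kappa <= 1) by (apply (kappa_le1 n p s X kappa); auto; [apply Hcol; lia|apply Hkap]).
  assert (Hsq : 0 < sqrt (INR s)) by (apply sqrt_lt_R0, lt_0_INR; lia).
  assert (Hnpos : 0 < INR n) by (apply lt_0_INR; lia).
  assert (Hk2 : 0 < kappa ^ 2) by (apply pow_lt; lra).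
  assert (HL : 0 < lam0 * sqrt (INR s) / kappa ^ 2) by (unfold Rdiv; apply Rmult_lt_0_compat; [nra|apply Rinv_0_lt_compat; lra]).
  assert (Hlam' : (1 - c1) * lam >= 56 / kappa ^ 2 * lam0 * sqrt (INR s)).
  { assert (E : 56 / (1 - c1) / kappa ^ 2 * lam0 * sqrt (INR s) = / (1 - c1) * (56 / kappa ^ 2 * lam0 * sqrt (INR s))) by (field; lra).
    rewrite E in Hlam. assert (0 < 1 - c1) by lra.
    apply Rle_ge. apply Rmult_le_reg_l with (/ (1 - c1)). apply Rinv_0_lt_compat; lra.
    replace (/ (1 - c1) * ((1 - c1) * lam)) with lam by (field; lra). lra. }
  assert (Ht0 : 0 < (1 - c1) * lam).
  { replace (56 / kappa ^ 2 * lam0 * sqrt (INR s)) with (56 * (lam0 * sqrt (INR s) / kappa ^ 2)) in Hlam' by (field; lra). lra. }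
  assert (Hlp : 0 < lam) by (destruct (Rlt_dec 0 lam); auto; nra).
  assert (Hd' : forall x, x > 0 -> derivable_pt_lim pen x (pen' x)) by (intros; apply Hd; auto).
  set (t0 := (1 - c1) * lam) in *.
  set (K1 := fun k => andb (Nat.ltb k p) (smallb t0 (bhat k))).
  assert (HK1 : forall k, K1 k = true -> (k < p)%nat /\ 0 < Rabs (bhat k) < t0).
  { intros k Hk. unfold K1 in Hk. apply andb_prop in Hk. destruct Hk as [Hk1' Hk2'].
    split. apply Nat.ltb_lt; auto. apply smallb_true; auto. }
  set (bs := zo bhat K1 p).
  assert (Hbs : is_global_min n p X y lam0 pen bs) by (apply (zo_glob n p X y lam0 s pen pen' pen'' lam c1 kappa0 pinf beta0); auto).
  assert (Htp : forall j, (j < p)%nat -> bs j <> 0 -> Rabs (bs j) >= t0).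
  { intros j Hj Hnz. unfold bs, zo in *. destruct (andb (Nat.ltb j p) (K1 j)) eqn:E; [lra|].
    rewrite (proj2 (Nat.ltb_lt j p) Hj) in E. simpl in E. unfold K1 in E. rewrite (proj2 (Nat.ltb_lt j p) Hj) in E. simpl in E.
    destruct (smallb_false _ _ E); auto. contradiction. }
  destruct (main_lemma n p s X beta0 eps pen pen' pen'' lam lam0 c1 kappa0 kappa pinf bs Hn Hl0 Hc1 Hk0 Hsp Htrue Hfalse H1 H2 Hd'
     ltac:(lra) Hsq Hlam' Hg Hbs Htp) as [Hbs1 [Hbs2 HR]].
  assert (Hagree : forall j, (j < p)%nat -> bhat j = bs j).
  { intros j Hj. unfold bs, zo. destruct (andb (Nat.ltb j p) (K1 j)) eqn:E; auto. exfalso.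
    apply andb_prop in E. destruct E as [_ EK]. destruct (HK1 j EK) as [_ Hsm].
    destruct (Compare_dec.lt_dec j s) as [Hjs|Hjs].
    - apply (Hbs1 j Hjs). unfold bs, zo. rewrite (proj2 (Nat.ltb_lt j p) Hj), EK. auto.
    - set (K2 := fun k => andb (K1 k) (negb (Nat.eqb k j))).
      assert (HK2 : forall k, K2 k = true -> (k < p)%nat /\ 0 < Rabs (bhat k) < t0).
      { intros k Hk. unfold K2 in Hk. apply andb_prop in Hk. apply HK1. tauto. }
      set (b' := zo bhat K2 p).
      assert (Hb' : is_global_min n p X y lam0 pen b') by (apply (zo_glob n p X y lam0 s pen pen' pen'' lam c1 kappa0 pinf beta0); auto).
      assert (Hb'j : b' j = bhat j).
      { unfold b', zo, K2. rewrite Nat.eqb_refl. rewrite !Bool.andb_false_r. auto. }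
      assert (Hbsu : bs = upd b' j 0).
      { apply functional_extensionality. intros k. unfold bs, b', zo, upd, K2.
        destruct (Nat.eq_dec k j). subst k. rewrite (proj2 (Nat.ltb_lt j p) Hj), EK. auto.
        rewrite (proj2 (Nat.eqb_neq k j) n0). simpl. rewrite Bool.andb_true_r. auto. }
      assert (Hbjnz : b' j <> 0) by (rewrite Hb'j; intro E; rewrite E, Rabs_R0 in Hsm; lra).
      pose proof (coord_min n p X y lam0 pen b' j Hn Hj (Hcol j Hj) Hb') as Hcm.
      pose proof (zbound p s pen pen' pen'' lam lam0 c1 kappa0 pinf beta0 _ _ H2 Hlp ltac:(lra) Hbjnz Hcm) as Hz.
      assert (Ea : b' j + acoef n p X y b' j = acoef n p X y bs j).
      { unfold acoef. rewrite Hbsu.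
        rewrite (sumR_ext (fun i => X i j * (y i - Xmul X p (upd b' j 0) i)) (fun i => X i j * (y i - Xmul X p b' i) + b' j * (X i j ^ 2))).
        2:{ intros i _. rewrite Xmul_upd by auto. ring. }
        rewrite sumR_plus, sumR_scal. fold (sqnorm (fun i => X i j) n). rewrite (Hcol j Hj). field. lra. }
      rewrite Ea in Hz. unfold y in Hz. rewrite acoef_decomp in Hz by auto.
      pose proof (col_CS n X j (Xmul X p (fun k => bs k - beta0 k)) Hn (Hcol j Hj)) as HC.
      specialize (Hg j Hj).
      assert (Hb3 : 7 / 2 * lam0 * sqrt (INR s) / kappa <= 56 * (lam0 * sqrt (INR s) / kappa ^ 2)).
      { replace (7 / 2 * lam0 * sqrt (INR s) / kappa) with (7 / 2 * kappa * (lam0 * sqrt (INR s) / kappa ^ 2)) by (field; lra). nra. }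
      replace (56 / kappa ^ 2 * lam0 * sqrt (INR s)) with (56 * (lam0 * sqrt (INR s) / kappa ^ 2)) in Hlam' by (field; lra).
      assert (t0 <= lam) by (unfold t0; nra).
      pose proof (Rabs_triang (/ INR n * sumR (fun i => X i j * eps i) n) (- (/ INR n * sumR (fun i => X i j * Xmul X p (fun k => bs k - beta0 k) i) n))) as Htr.
      rewrite Rabs_Ropp in Htr.
      set (A := / INR n * sumR (fun i => X i j * eps i) n) in *.
      set (B := / INR n * sumR (fun i => X i j * Xmul X p (fun k => bs k - beta0 k) i) n) in *.
      replace (A + - B) with (A - B) in Htr by ring. lra. }
  assert (Hs1' : forall j, (j < s)%nat -> bhat j <> 0) by (intros j Hj; rewrite Hagree by lia; auto).
  assert (Hs2' : forall j, (s <= j < p)%nat -> bhat j = 0) by (intros j Hj; rewrite Hagree by lia; auto).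
  apply (refit_oracle n p s X y bhat bt); auto.
Qed.

Lemma lambda0_pos c n p : c > 0 -> (2 <= n)%nat -> 0 < lambda0 c n p.
Proof.
  intros Hc Hn. unfold lambda0, pbar. apply Rmult_lt_0_compat; [lra|]. apply sqrt_lt_R0.
  assert (H2 : 2 <= INR n) by (replace 2 with (INR 2) by (simpl; ring); apply le_INR; lia).
  assert (INR n <= INR (Nat.max n p)) by (apply le_INR; lia).
  unfold Rdiv. apply Rmult_lt_0_compat. rewrite <- ln_1. apply ln_increasing; lra.
  apply Rinv_0_lt_compat; lra.
Qed.

Lemma prob_compl {Omega : Type} (P : (Omega -> Prop) -> R) (A : Omega -> Prop) :
  is_prob P -> P (fun w => ~ A w) = 1 - P A.
Proof.
  intros (H0 & H1 & Hext & Hadd).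
  assert (E : P (fun w => A w \/ ~ A w) = P A + P (fun w => ~ A w)) by (apply Hadd; tauto).
  assert (E2 : P (fun w => A w \/ ~ A w) = P (fun _ => True)) by (apply Hext; intros w; split; auto; intros _; apply Classical_Prop.classic).
  lra.
Qed.

Lemma prob_mono {Omega : Type} (P : (Omega -> Prop) -> R) (A B : Omega -> Prop) :
  is_prob P -> (forall w, A w -> B w) -> P A <= P B.
Proof.
  intros (H0 & H1 & Hext & Hadd) HAB.
  assert (E : P (fun w => A w \/ (B w /\ ~ A w)) = P A + P (fun w => B w /\ ~ A w)) by (apply Hadd; tauto).
  assert (E2 : P (fun w => A w \/ (B w /\ ~ A w)) = P B).
  { apply Hext; intros w; split. intros [H|[H _]]; auto. intros Hb. destruct (Classical_Prop.classic (A w)); auto. }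
  specialize (H0 (fun w => B w /\ ~ A w)). lra.
Qed.

Theorem corollary1
  (Omega : Type) (P : (Omega -> Prop) -> R)
  (p s : nat -> nat) (X : nat -> nat -> nat -> R) (beta0 : nat -> nat -> R)
  (eps : nat -> Omega -> nat -> R)
  (lam : nat -> R) (pen pen' pen'' : nat -> R -> R) (pinf : nat -> R)
  (c c0 c1 kappa0 : R) (kappa : nat -> R)
  (HP : is_prob P)
  (Hc : c > 0) (Hc0 : c0 > 0) (Hc1 : 0 <= c1 < 1) (Hk0 : kappa0 > 0)
  (Hsupp : forall n, (s n <= p n)%nat /\
             (forall j, (j < s n)%nat -> beta0 n j <> 0) /\
             (forall j, (s n <= j < p n)%nat -> beta0 n j = 0))
  (HC1 : forall n, (1 <= n)%nat -> Condition1 n (p n) (s n) (X n) kappa0 (kappa n))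
  (HC2 : forall n, (1 <= n)%nat ->
           Condition2 (p n) (s n) (pen n) (pen' n) (pen'' n) (lam n)
             (lambda0 c n (p n)) c1 kappa0 (pinf n) (beta0 n))
  (HC1diff : forall n x, (1 <= n)%nat -> x > 0 ->
           derivable_pt_lim (pen n) x (pen' n x) /\ continuity_pt (pen' n) x)
  (Hlam : forall n, (1 <= n)%nat ->
           lam n >= 56 / (1 - c1) / (kappa n ^ 2) * lambda0 c n (p n) * sqrt (INR (s n)))
  (HD : exists C N, forall n, (N <= n)%nat -> (1 <= n)%nat ->
           P (fun w => exists j, (j < p n)%nat /\
                Rabs (/ INR n * sumR (fun i => X n i j * eps n w i) n)
                  > lambda0 c n (p n) / 2)
           <= C * Rpower (INR (pbar n (p n))) (- c0)) :
  exists C N, forall n, (N <= n)%nat -> (1 <= n)%nat ->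
    P (fun w =>
         let y := fun i => Xmul (X n) (p n) (beta0 n) i + eps n w i in
         forall bhat bt : nat -> R,
           is_global_min n (p n) (X n) y (lambda0 c n (p n)) (pen n) bhat ->
           is_refit n (p n) (X n) y bhat bt ->
           is_oracle n (p n) (s n) (X n) y bt)
    >= 1 - C * Rpower (INR (pbar n (p n))) (- c0).
Proof.
  destruct HD as [C [N HN]]. exists C, (Nat.max N 2). intros n Hn Hn1.
  specialize (HN n ltac:(lia) Hn1).
  set (bad := fun w => exists j, (j < p n)%nat /\
                Rabs (/ INR n * sumR (fun i => X n i j * eps n w i) n) > lambda0 c n (p n) / 2) in *.
  assert (Hsub : forall w, ~ bad w ->
     let y := fun i => Xmul (X n) (p n) (beta0 n) i + eps n w i in
         forall bhat bt : nat -> R,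
           is_global_min n (p n) (X n) y (lambda0 c n (p n)) (pen n) bhat ->
           is_refit n (p n) (X n) y bhat bt ->
           is_oracle n (p n) (s n) (X n) y bt).
  { intros w Hw y bhat bt Hg Hr. destruct (Hsupp n) as (Hsp & Ht & Hf).
    refine (core n (p n) (s n) (X n) (beta0 n) (eps n w) (pen n) (pen' n) (pen'' n) (lam n) (lambda0 c n (p n))
            c1 kappa0 (kappa n) (pinf n) ltac:(lia) _ Hc1 Hk0 Hsp Ht Hf (HC1 n Hn1) (HC2 n Hn1) _ (Hlam n Hn1) _ bhat bt Hg Hr).
    - apply lambda0_pos; auto; lia.
    - intros x Hx. apply HC1diff; auto.
    - intros j Hj. destruct (Rle_dec (Rabs (/ INR n * sumR (fun i => X n i j * eps n w i) n)) (lambda0 c n (p n) / 2)); auto.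
      exfalso. apply Hw. exists j. split; auto. lra. }
  pose proof (prob_mono P _ _ HP Hsub) as Hm. rewrite (prob_compl P bad HP) in Hm. lra.
Qed.
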